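(* For every $n\ge1$ and $t\in(0,1)$, the recurrence coefficients satisfy $$(\alpha+\beta+\gamma+2n+2)\alpha_n=2(t-1)r_n-2ty_n-(t-1)R_n+t\alpha+(t-1)\beta+t,$$ and \begin{align*} &(\alpha+\beta+\gamma+2n+1)(\alpha+\beta+\gamma+2n-1)\beta_n\\ &=[ty_n-(t-1)r_n]^2-(t-1)(2nt+\gamma t+\beta)r_n+t[(t-1)(2n+\gamma)-\alpha]y_n+n(n+\gamma)(t^2-t). \end{align*}
   Context: Fix $\alpha,\beta,\gamma>0$ and real constants $A,B$ with $A\ge0$, $A+B\ge0$, not both $A$ and $A+B$ equal to $0$. Let $\theta$ be the Heaviside function. For $t\in(0,1)$ put $w(x)=x^{\alpha}(1-x)^{\beta}|x-t|^{\gamma}(A+B\theta(x-t))$ on $[0,1]$. Let $P_n$ be the monic orthogonal polynomials w.r.t. $w$ on $[0,1]$, $\int_0^1P_mP_nw\,dx=h_n\delta_{mn}$, with recurrence $xP_n=P_{n+1}+\alpha_nP_n+\beta_nP_{n-1}$, $P_0=1$, $\beta_0P_{-1}=0$. Define $R_n=\frac{\beta}{h_n}\int_0^1\frac{P_n^2w}{1-y}dy$, and for $n\ge1$, $y_n=\frac{\alpha}{h_{n-1}}\int_0^1\frac{P_nP_{n-1}w}{y}dy$, $r_n=\frac{\beta}{h_{n-1}}\int_0^1\frac{P_nP_{n-1}w}{1-y}dy$. *)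

(* Defs.v *)
From Stdlib Require Import Reals Lra.
Open Scope R_scope.

(* x^a for real exponent a > 0, extended by 0 at x <= 0 (continuous extension). *)
Definition rpw (x a : R) : R := if Rlt_dec 0 x then Rpower x a else 0.

(* Heaviside function (value at 0 is irrelevant for all integrals below). *)
Definition heav (x : R) : R := if Rlt_dec 0 x then 1 else 0.

Definition wgt (al be ga A B t x : R) : R :=
  rpw x al * rpw (1 - x) be * rpw (Rabs (x - t)) ga * (A + B * heav (x - t)).

(* (Possibly improper) integral over (0,1):  int_0^1 f = l  means
   lim_{a->0+, b->1-} int_a^b f = l  (Riemann integrals on compact subintervals). *)
Definition int01 (f : R -> R) (l : R) : Prop :=
  forall eps, 0 < eps -> exists delta, 0 < delta /\
    forall a b, 0 < a < delta -> 0 < 1 - b < delta ->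
      exists pr : Riemann_integrable f a b, Rabs (RiemannInt pr - l) < eps.

Fixpoint lowpoly (c : nat -> R) (n : nat) (x : R) : R :=
  match n with
  | O => 0
  | S m => lowpoly c m x + c m * x ^ m
  end.

Definition monic_deg (n : nat) (p : R -> R) : Prop :=
  exists c : nat -> R, forall x, p x = x ^ n + lowpoly c n x.

Definition monic_OPS (w : R -> R) (P : nat -> R -> R) (h : nat -> R) : Prop :=
  (forall n, monic_deg n (P n)) /\
  (forall m n, m <> n -> int01 (fun x => P m x * P n x * w x) 0) /\
  (forall n, int01 (fun x => P n x * P n x * w x) (h n)).

Definition recurrence (P : nat -> R -> R) (an bn : nat -> R) : Prop :=
  (forall x, x * P O x = P 1%nat x + an O * P O x) /\
  (forall n x, (1 <= n)%nat ->
     x * P n x = P (S n) x + an n * P n x + bn n * P (pred n) x).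

(* Main.v *)
Require Import Defs.
From Stdlib Require Import Reals Lra Lia Classical.
From Coquelicot Require Import Coquelicot.
Open Scope R_scope.


Lemma rpw_pos x a : 0 < x -> rpw x a = Rpower x a.
Proof. intro H; unfold rpw; destruct (Rlt_dec 0 x); [reflexivity|lra]. Qed.
Lemma rpw_npos x a : x <= 0 -> rpw x a = 0.
Proof. intro H; unfold rpw; destruct (Rlt_dec 0 x); [lra|reflexivity]. Qed.
Lemma rpw_ge0 x a : 0 <= rpw x a.
Proof. unfold rpw; destruct (Rlt_dec 0 x); [unfold Rpower; left; apply exp_pos|lra]. Qed.
Lemma rpw_gt0 x a : 0 < x -> 0 < rpw x a.
Proof. intro H; rewrite rpw_pos; auto; unfold Rpower; apply exp_pos. Qed.

Lemma Rpower_small a eps : 0 < a -> 0 < eps ->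
  exists d, 0 < d /\ forall h, 0 < h < d -> Rpower h a < eps.
Proof.
  intros Ha He. exists (Rpower eps (/ a)). split.
  - unfold Rpower; apply exp_pos.
  - intros h Hh. replace eps with (Rpower (Rpower eps (/ a)) a).
    + apply Rlt_Rpower_l; lra.
    + rewrite Rpower_mult. replace (/ a * a) with 1 by (field; lra).
      apply Rpower_1; auto.
Qed.

Lemma rpw_derive_pos x a : 0 < x -> is_derive (fun u => rpw u a) x (a * Rpower x (a - 1)).
Proof.
  intro Hx. apply is_derive_ext_loc with (fun u => Rpower u a).
  - apply locally_interval with 0 p_infty; simpl; auto.
    intros y Hy _. rewrite rpw_pos; auto.
  - apply is_derive_Reals. apply derivable_pt_lim_power; auto.
Qed.

Lemma rpw_derive_neg x a : x < 0 -> is_derive (fun u => rpw u a) x 0.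
Proof.
  intro Hx. apply is_derive_ext_loc with (fun _ => 0).
  - apply locally_interval with m_infty 0; simpl; auto.
    intros y _ Hy. rewrite rpw_npos; auto; lra.
  - apply (is_derive_const 0).
Qed.

Lemma deriv_cont (f : R -> R) x l : is_derive f x l -> continuous f x.
Proof.
  intro H. apply continuity_pt_filterlim.
  apply derivable_continuous_pt. exists l. apply is_derive_Reals; auto.
Qed.

Lemma rpw_cont a x : 0 < a -> continuous (fun u => rpw u a) x.
Proof.
  intro Ha. destruct (Rlt_le_dec 0 x) as [Hx|Hx].
  - eapply deriv_cont; apply rpw_derive_pos; auto.
  - destruct Hx as [Hx|Hx].
    + eapply deriv_cont; apply rpw_derive_neg; auto.
    + subst x. apply continuity_pt_filterlim.
      intros eps Heps. destruct (Rpower_small a eps Ha Heps) as [d [Hd Hd2]].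
      exists d; split; auto. intros y [_ Hy]. simpl in *. unfold R_dist in *.
      rewrite (rpw_npos 0) by lra. rewrite Rminus_0_r in *.
      destruct (Rlt_le_dec 0 y).
      * rewrite rpw_pos by auto. rewrite Rabs_pos_eq.
        -- apply Hd2. rewrite Rabs_pos_eq in Hy; lra.
        -- unfold Rpower; left; apply exp_pos.
      * rewrite rpw_npos by auto. rewrite Rabs_R0; auto.
Qed.

Lemma rpw_derive_gt1 a x : 1 < a -> is_derive (fun u => rpw u a) x (a * rpw x (a - 1)).
Proof.
  intro Ha. destruct (Rlt_le_dec 0 x) as [Hx|Hx].
  - rewrite (rpw_pos x) by auto. apply rpw_derive_pos; auto.
  - destruct Hx as [Hx|Hx].
    + rewrite (rpw_npos x) by lra. rewrite Rmult_0_r. apply rpw_derive_neg; auto.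
    + subst x. rewrite (rpw_npos 0) by lra. rewrite Rmult_0_r.
      apply is_derive_Reals. intros eps Heps.
      destruct (Rpower_small (a - 1) eps) as [d [Hd Hd2]]; try lra.
      exists (mkposreal d Hd). intros hh Hh0 Hh. simpl in Hh.
      rewrite Rplus_0_l, (rpw_npos 0) by lra. rewrite Rminus_0_r.
      destruct (Rlt_le_dec 0 hh).
      * rewrite rpw_pos by auto.
        assert (E : Rpower hh a = Rpower hh (a - 1) * hh).
        { replace a with ((a - 1) + 1) at 1 by ring. rewrite Rpower_plus, Rpower_1 by auto. ring. }
        rewrite E. match goal with |- Rabs ?X < _ => replace X with (Rpower hh (a - 1)) by (field; lra) end.
        rewrite Rabs_pos_eq. apply Hd2. rewrite Rabs_pos_eq in Hh; lra.
        unfold Rpower; left; apply exp_pos.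
      * rewrite rpw_npos by auto. match goal with |- Rabs ?X < _ => replace X with 0 by (field; lra) end.
        rewrite Rabs_R0; auto.
Qed.


Lemma cont_plus (f g : R -> R) x : continuous f x -> continuous g x -> continuous (fun y => f y + g y) x.
Proof. intros; apply (continuous_plus f g); auto. Qed.
Lemma cont_mult (f g : R -> R) x : continuous f x -> continuous g x -> continuous (fun y => f y * g y) x.
Proof. intros; apply (continuous_mult f g); auto. Qed.
Lemma cont_opp (f : R -> R) x : continuous f x -> continuous (fun y => - f y) x.
Proof. intros; apply (continuous_opp f); auto. Qed.
Lemma cont_minus (f g : R -> R) x : continuous f x -> continuous g x -> continuous (fun y => f y - g y) x.
Proof. intros; apply cont_plus; auto; apply cont_opp; auto. Qed.
Lemma cont_const (c : R) x : continuous (fun _ : R => c) x.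
Proof. apply continuous_const. Qed.
Lemma cont_id x : continuous (fun y : R => y) x.
Proof. apply continuous_id. Qed.
Lemma cont_comp (f g : R -> R) x : continuous f x -> continuous g (f x) -> continuous (fun y => g (f y)) x.
Proof. intros; apply (continuous_comp f g); auto. Qed.

Lemma is_derive_eq (f : R -> R) x l l' : is_derive f x l -> l = l' -> is_derive f x l'.
Proof. intros H ->; auto. Qed.

Lemma rpw_succ u c : rpw u (c + 1) = u * rpw u c.
Proof.
  destruct (Rlt_le_dec 0 u).
  - rewrite !rpw_pos by auto. rewrite Rpower_plus, Rpower_1 by auto. ring.
  - rewrite !rpw_npos by auto. ring.
Qed.

Definition W3 ga A B t x := (A + B) * rpw (x - t) ga + A * rpw (t - x) ga.
Definition Gf ga A B t x := (A + B) * rpw (x - t) (ga + 1) - A * rpw (t - x) (ga + 1).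

Lemma wgt_eq al be ga A B t x :
  wgt al be ga A B t x = rpw x al * rpw (1 - x) be * W3 ga A B t x.
Proof.
  unfold wgt, W3, heav. destruct (Rlt_dec 0 (x - t)).
  - rewrite Rabs_pos_eq by lra. rewrite (rpw_npos (t - x)) by lra. ring.
  - destruct (Req_dec x t).
    + subst. replace (t - t) with 0 by ring. rewrite Rabs_R0, !(rpw_npos 0) by lra. ring.
    + rewrite Rabs_left by lra. rewrite (rpw_npos (x - t)) by lra.
      replace (- (x - t)) with (t - x) by ring. ring.
Qed.

Lemma G_eq ga A B t x : Gf ga A B t x = (x - t) * W3 ga A B t x.
Proof.
  unfold Gf, W3. rewrite !rpw_succ.
  destruct (Rlt_le_dec 0 (x - t)).
  - rewrite (rpw_npos (t - x)) by lra. ring.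
  - rewrite (rpw_npos (x - t)) by lra. ring.
Qed.

Lemma G_derive ga A B t x : 0 < ga -> is_derive (Gf ga A B t) x ((ga + 1) * W3 ga A B t x).
Proof.
  intro Hga. unfold Gf, W3.
  assert (H1 : forall s, is_derive (fun u => rpw u (ga + 1)) s ((ga + 1) * rpw s ga)).
  { intro s. eapply is_derive_eq. apply rpw_derive_gt1; lra. f_equal; f_equal; ring. }
  assert (D1 : is_derive (fun y => rpw (y - t) (ga + 1)) x (1 * ((ga + 1) * rpw (x - t) ga))).
  { apply (is_derive_comp (fun u => rpw u (ga + 1)) (fun y => y - t)). apply H1.
    eapply is_derive_eq. apply (is_derive_minus (fun y => y) (fun _ => t)). apply is_derive_id.
    apply is_derive_const. simpl. unfold minus, plus, opp, zero, one; simpl. ring. }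
  assert (D2 : is_derive (fun y => rpw (t - y) (ga + 1)) x ((-1) * ((ga + 1) * rpw (t - x) ga))).
  { apply (is_derive_comp (fun u => rpw u (ga + 1)) (fun y => t - y)). apply H1.
    eapply is_derive_eq. apply (is_derive_minus (fun _ => t) (fun y => y)). apply is_derive_const.
    apply is_derive_id. simpl. unfold minus, plus, opp, zero, one; simpl. ring. }
  eapply is_derive_eq.
  apply (is_derive_minus (fun y => (A + B) * rpw (y - t) (ga + 1)) (fun y => A * rpw (t - y) (ga + 1))).
  apply is_derive_scal; exact D1. apply is_derive_scal; exact D2.
  unfold minus, plus, opp; simpl. ring.
Qed.

Lemma W3_cont ga A B t x : 0 < ga -> continuous (W3 ga A B t) x.
Proof.
  intro Hga. unfold W3. apply cont_plus; apply cont_mult; try apply cont_const.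
  - apply (cont_comp (fun y => y - t) (fun u => rpw u ga)). apply cont_minus; [apply cont_id|apply cont_const].
    apply rpw_cont; auto.
  - apply (cont_comp (fun y => t - y) (fun u => rpw u ga)). apply cont_minus; [apply cont_const|apply cont_id].
    apply rpw_cont; auto.
Qed.

Lemma wgt_cont al be ga A B t x : 0 < al -> 0 < be -> 0 < ga -> continuous (wgt al be ga A B t) x.
Proof.
  intros. eapply continuous_ext. intro y; symmetry; apply wgt_eq.
  apply cont_mult; [apply cont_mult|apply W3_cont; auto].
  apply rpw_cont; auto.
  apply (cont_comp (fun y => 1 - y) (fun u => rpw u be)). apply cont_minus; [apply cont_const|apply cont_id].
  apply rpw_cont; auto.
Qed.

Lemma G_cont ga A B t x : 0 < ga -> continuous (Gf ga A B t) x.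
Proof. intro; eapply deriv_cont; apply G_derive; auto. Qed.


Definition int01' (f : R -> R) (l : R) : Prop :=
  forall eps, 0 < eps -> exists delta, 0 < delta /\
    forall a b, 0 < a < delta -> 0 < 1 - b < delta ->
      ex_RInt f a b /\ Rabs (RInt f a b - l) < eps.

Lemma int01_of f l : int01' f l -> int01 f l.
Proof.
  intros H eps He. destruct (H eps He) as [d [Hd H2]]. exists d; split; auto.
  intros a b Ha Hb. destruct (H2 a b Ha Hb) as [E L].
  exists (ex_RInt_Reals_0 _ _ _ E). rewrite <- RInt_Reals. auto.
Qed.

Lemma int01_to f l : int01 f l -> int01' f l.
Proof.
  intros H eps He. destruct (H eps He) as [d [Hd H2]]. exists d; split; auto.
  intros a b Ha Hb. destruct (H2 a b Ha Hb) as [pr L]. split.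
  apply ex_RInt_Reals_1; auto. rewrite (RInt_Reals _ _ _ pr); auto.
Qed.

Lemma int01'_shrink f l : int01' f l -> forall eps, 0 < eps -> exists delta, 0 < delta /\ delta <= /2 /\
    forall a b, 0 < a < delta -> 0 < 1 - b < delta ->
      ex_RInt f a b /\ Rabs (RInt f a b - l) < eps.
Proof.
  intros H eps He. destruct (H eps He) as [d [Hd H2]]. exists (Rmin d (/2)).
  split; [apply Rmin_pos; lra|split; [apply Rmin_r|]].
  intros a b Ha Hb. apply H2; pose proof (Rmin_l d (/2)); lra.
Qed.

Lemma int01'_unique f l1 l2 : int01' f l1 -> int01' f l2 -> l1 = l2.
Proof.
  intros H1 H2. destruct (Req_dec l1 l2) as [|Hne]; auto. exfalso.
  set (e := Rabs (l1 - l2) / 3).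
  assert (He : 0 < e). { unfold e. assert (l1 - l2 <> 0) by lra. pose proof (Rabs_pos_lt _ H). lra. }
  destruct (H1 e He) as [d1 [Hd1 K1]]. destruct (H2 e He) as [d2 [Hd2 K2]].
  set (a := Rmin d1 d2 / 2).
  assert (Ha : 0 < a < Rmin d1 d2). { unfold a. pose proof (Rmin_pos d1 d2 Hd1 Hd2). lra. }
  pose proof (Rmin_l d1 d2). pose proof (Rmin_r d1 d2).
  destruct (K1 a (1 - a)) as [_ L1]; try lra.
  destruct (K2 a (1 - a)) as [_ L2]; try lra.
  assert (Rabs (l1 - l2) <= Rabs (RInt f a (1 - a) - l1) + Rabs (RInt f a (1 - a) - l2)).
  { replace (l1 - l2) with (- (RInt f a (1 - a) - l1) + (RInt f a (1 - a) - l2)) by ring.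
    eapply Rle_trans. apply Rabs_triang. rewrite Rabs_Ropp. lra. }
  unfold e in *. lra.
Qed.

Lemma int01_unique f l1 l2 : int01 f l1 -> int01 f l2 -> l1 = l2.
Proof. intros; eapply int01'_unique; apply int01_to; eauto. Qed.

Lemma int01'_ext f g l : (forall x, 0 < x < 1 -> f x = g x) -> int01' f l -> int01' g l.
Proof.
  intros E H eps He. destruct (int01'_shrink f l H eps He) as [d [Hd [Hd2 K]]].
  exists d; split; auto. intros a b Ha Hb. destruct (K a b Ha Hb) as [X L].
  assert (E2 : forall x, Rmin a b < x < Rmax a b -> f x = g x).
  { intros x Hx. apply E. pose proof (Rmin_l a b). pose proof (Rmin_r a b).
    pose proof (Rmax_l a b). pose proof (Rmax_r a b).
    split. destruct (Rle_dec a b); [rewrite Rmin_left in Hx|rewrite Rmin_right in Hx]; lra.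
    destruct (Rle_dec a b); [rewrite Rmax_right in Hx|rewrite Rmax_left in Hx]; lra. }
  split. eapply ex_RInt_ext; eauto. rewrite <- (RInt_ext f g); auto.
Qed.

Lemma int01'_plus f g l m : int01' f l -> int01' g m -> int01' (fun x => f x + g x) (l + m).
Proof.
  intros H1 H2 eps He.
  destruct (H1 (eps/2)) as [d1 [Hd1 K1]]; try lra. destruct (H2 (eps/2)) as [d2 [Hd2 K2]]; try lra.
  exists (Rmin d1 d2). split. apply Rmin_pos; auto.
  intros a b Ha Hb. pose proof (Rmin_l d1 d2). pose proof (Rmin_r d1 d2).
  destruct (K1 a b) as [X1 L1]; try lra. destruct (K2 a b) as [X2 L2]; try lra.
  split. apply (ex_RInt_plus f g); auto.
  rewrite (RInt_plus f g) by auto. unfold plus; simpl.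
  replace (RInt f a b + RInt g a b - (l + m)) with ((RInt f a b - l) + (RInt g a b - m)) by ring.
  eapply Rle_lt_trans. apply Rabs_triang. lra.
Qed.

Lemma int01'_scal c f l : int01' f l -> int01' (fun x => c * f x) (c * l).
Proof.
  intros H eps He.
  destruct (H (eps / (Rabs c + 1))) as [d [Hd K]].
  { apply Rdiv_lt_0_compat; auto. pose proof (Rabs_pos c); lra. }
  exists d; split; auto. intros a b Ha Hb. destruct (K a b Ha Hb) as [X L].
  split. apply (ex_RInt_scal f a b c); auto.
  rewrite (RInt_scal f) by auto. unfold scal; simpl; unfold mult; simpl.
  replace (c * RInt f a b - c * l) with (c * (RInt f a b - l)) by ring.
  rewrite Rabs_mult. pose proof (Rabs_pos c). pose proof (Rabs_pos (RInt f a b - l)).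
  apply Rle_lt_trans with ((Rabs c + 1) * Rabs (RInt f a b - l)). nra.
  replace eps with ((Rabs c + 1) * (eps / (Rabs c + 1))) by (field; lra).
  apply Rmult_lt_compat_l; lra.
Qed.

Lemma cont_eps (F : R -> R) x0 : continuous F x0 -> forall eps, 0 < eps ->
  exists d, 0 < d /\ forall y, Rabs (y - x0) < d -> Rabs (F y - F x0) < eps.
Proof.
  intros H eps He. apply continuity_pt_filterlim in H.
  destruct (H eps He) as [d [Hd K]]. exists d; split; auto.
  intros y Hy. destruct (Req_dec y x0). subst. replace (F x0 - F x0) with 0 by ring. rewrite Rabs_R0; auto.
  apply (K y). split. split; auto. exact I. auto.
Qed.

Lemma int01'_ftc (F f : R -> R) :
  (forall x, 0 < x < 1 -> is_derive F x (f x)) ->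
  (forall x, 0 < x < 1 -> continuous f x) ->
  continuous F 0 -> continuous F 1 -> F 0 = 0 -> F 1 = 0 -> int01' f 0.
Proof.
  intros HD HC C0 C1 F0 F1 eps He.
  destruct (cont_eps F 0 C0 (eps/2)) as [d0 [Hd0 K0]]; try lra.
  destruct (cont_eps F 1 C1 (eps/2)) as [d1 [Hd1 K1]]; try lra.
  exists (Rmin (/2) (Rmin d0 d1)). split. repeat apply Rmin_pos; lra.
  intros a b Ha Hb. pose proof (Rmin_l (/2) (Rmin d0 d1)). pose proof (Rmin_r (/2) (Rmin d0 d1)).
  pose proof (Rmin_l d0 d1). pose proof (Rmin_r d0 d1).
  assert (I : is_RInt f a b (minus (F b) (F a))).
  { apply (is_RInt_derive F f); rewrite Rmin_left, Rmax_right by lra; intros x Hx.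
    apply HD; lra. apply HC; lra. }
  split. eexists; eauto. rewrite (is_RInt_unique _ _ _ _ I). unfold minus, plus, opp; simpl.
  assert (A1 : Rabs (F a - F 0) < eps/2). { apply K0. rewrite Rminus_0_r, Rabs_pos_eq; lra. }
  assert (A2 : Rabs (F b - F 1) < eps/2). { apply K1. rewrite Rabs_left; lra. }
  rewrite F0, Rminus_0_r in A1. rewrite F1, Rminus_0_r in A2.
  replace (F b + - F a - 0) with (F b + - F a) by ring.
  eapply Rle_lt_trans. apply Rabs_triang. rewrite Rabs_Ropp. lra.
Qed.

Lemma int01'_cont (f : R -> R) : (forall x, 0 <= x <= 1 -> continuous f x) -> int01' f (RInt f 0 1).
Proof.
  intros HC.
  destruct (continuity_ab_maj (fun x => Rabs (f x)) 0 1) as [xm [Hm _]]; try lra.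
  { intros c Hc. apply continuity_pt_filterlim. apply continuous_Rabs_comp. apply HC; auto. }
  set (Mb := Rabs (f xm)). assert (HMb : 0 <= Mb) by apply Rabs_pos.
  assert (EX : forall u v, 0 <= u <= v -> v <= 1 -> ex_RInt f u v).
  { intros u v Huv Hv. apply (ex_RInt_continuous (V := R_CompleteNormedModule) f). rewrite Rmin_left, Rmax_right by lra.
    intros; apply HC; lra. }
  intros eps He. exists (Rmin (/2) (eps / (2 * Mb + 2))). split.
  { apply Rmin_pos. lra. apply Rdiv_lt_0_compat; lra. }
  intros a b Ha Hb. pose proof (Rmin_l (/2) (eps / (2 * Mb + 2))). pose proof (Rmin_r (/2) (eps / (2 * Mb + 2))).
  split. apply EX; lra.
  assert (E : RInt f 0 1 = RInt f 0 a + RInt f a b + RInt f b 1).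
  { rewrite <- (RInt_Chasles f 0 a 1) by (apply EX; lra).
    rewrite <- (RInt_Chasles f a b 1) by (apply EX; lra). unfold plus; simpl. ring. }
  assert (B1 : Rabs (RInt f 0 a) <= (a - 0) * Mb).
  { apply abs_RInt_le_const. lra. apply EX; lra. intros; apply Hm; lra. }
  assert (B2 : Rabs (RInt f b 1) <= (1 - b) * Mb).
  { apply abs_RInt_le_const. lra. apply EX; lra. intros; apply Hm; lra. }
  rewrite E. replace (RInt f a b - (RInt f 0 a + RInt f a b + RInt f b 1)) with (- (RInt f 0 a + RInt f b 1)) by ring.
  rewrite Rabs_Ropp. eapply Rle_lt_trans. apply Rabs_triang.
  assert ((a + (1 - b)) * Mb < eps).
  { apply Rle_lt_trans with (2 * (eps / (2 * Mb + 2)) * Mb). apply Rmult_le_compat_r; lra.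
    replace (2 * (eps / (2 * Mb + 2)) * Mb) with (eps * (2 * Mb / (2 * Mb + 2))) by (field; lra).
    assert (2 * Mb / (2 * Mb + 2) < 1). { apply (Rmult_lt_reg_r (2 * Mb + 2)). lra. field_simplify; lra. }
    nra. }
  nra.
Qed.


Ltac Rring := match goal with |- ?a = ?b => change (@eq R a b) end; ring.
Ltac Rfield := match goal with |- ?a = ?b => change (@eq R a b) end; field.

Definition CC1 (S : R -> R) := (forall x, ex_derive S x) /\ (forall x, continuous (Derive S) x).
Definition Mw (w f : R -> R) : R := RInt (fun x => f x * w x) 0 1.

Definition m0 t x := (1 - x) * (x - t).
Definition tau0 al be ga t x := - (1 + be) * (x - t) + al * (1 + t - x) + (ga + 1) * (1 - x).
Definition m1 t x := x * (x - t).
Definition tau1 al be ga t x := (2 + al + be + ga) * x - t - al * t + be * (1 - t).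

Definition X0 al be ga A B t S :=
  Mw (wgt al be ga A B t) (fun x => Derive S x * m0 t x + S x * tau0 al be ga t x) / (al * t).
Definition X1 al be ga A B t S :=
  Mw (wgt al be ga A B t) (fun x => Derive S x * m1 t x + S x * tau1 al be ga t x) / (be * (1 - t)).

Lemma C1_cont S x : CC1 S -> continuous S x.
Proof. intros [H _]. eapply deriv_cont. apply Derive_correct. apply H. Qed.


Ltac cont_tac :=
  match goal with
  | |- continuous (fun _ => ?c) ?x => apply (cont_const c x)
  | |- continuous (fun y => y) ?x => apply (cont_id x)
  | |- continuous (fun y => @?f y + @?g y) ?x => apply (cont_plus f g x); cont_tac
  | |- continuous (fun y => @?f y - @?g y) ?x => apply (cont_minus f g x); cont_tac
  | |- continuous (fun y => @?f y * @?g y) ?x => apply (cont_mult f g x); cont_tac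
  | |- continuous (fun y => @?f y / @?g y) ?x => apply (cont_mult f (fun y => / g y) x); cont_tac
  | |- continuous (fun y => - @?f y) ?x => apply (cont_opp f x); cont_tac
  | |- continuous (fun y => / @?g y) ?x => apply (continuous_Rinv_comp g x); [cont_tac|try lra]
  | |- continuous (fun y => rpw y ?a) ?x => apply (rpw_cont a x); lra
  | |- continuous (fun y => rpw (@?g y) ?a) ?x => apply (cont_comp g (fun u => rpw u a) x); [cont_tac|apply rpw_cont; lra]
  | |- continuous (fun y => wgt ?al ?be ?ga ?A ?B ?t y) ?x => apply (wgt_cont al be ga A B t x); lra
  | |- continuous (fun y => Gf ?ga ?A ?B ?t y) ?x => apply (G_cont ga A B t x); lra
  | H : CC1 ?S |- continuous (fun y => Derive ?S y) ?x => apply (proj2 H x)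
  | H : CC1 ?S |- continuous (fun y => ?S y) ?x => apply (C1_cont S x H)
  | _ => idtac
  end.

Lemma int01'_eqv f l l' : int01' f l -> l = l' -> int01' f l'.
Proof. intros H ->; auto. Qed.

Lemma IBP_core al be ga A B t (S g : R -> R) dg x :
  0 < ga -> 0 < x < 1 -> ex_derive S x -> is_derive g x (dg x) ->
  is_derive (fun y => S y * g y * rpw y al * rpw (1 - y) be * Gf ga A B t y) x
   (Derive S x * g x * Rpower x al * Rpower (1 - x) be * Gf ga A B t x
    + S x * dg x * Rpower x al * Rpower (1 - x) be * Gf ga A B t x
    + S x * g x * (al * Rpower x (al - 1)) * Rpower (1 - x) be * Gf ga A B t x
    + S x * g x * Rpower x al * (- (be * Rpower (1 - x) (be - 1))) * Gf ga A B t x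
    + S x * g x * Rpower x al * Rpower (1 - x) be * ((ga + 1) * W3 ga A B t x)).
Proof.
  intros Hga Hx HS Hg.
  assert (DY : is_derive (fun y => rpw (1 - y) be) x (- (be * Rpower (1 - x) (be - 1)))).
  { eapply is_derive_eq. apply (is_derive_comp (fun u => rpw u be) (fun y => 1 - y)).
    apply rpw_derive_pos; lra.
    apply (is_derive_minus (fun _ => 1) (fun y => y)). apply is_derive_const. apply is_derive_id.
    unfold scal, minus, plus, opp, zero, one; simpl; unfold mult; simpl. Rring. }
  eapply is_derive_eq.
  apply (is_derive_mult (fun y => S y * g y * rpw y al * rpw (1 - y) be) (Gf ga A B t)); [|apply G_derive; auto|intros; apply Rmult_comm].
  apply (is_derive_mult (fun y => S y * g y * rpw y al) (fun y => rpw (1 - y) be)); [|exact DY|intros; apply Rmult_comm].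
  apply (is_derive_mult (fun y => S y * g y) (fun y => rpw y al)); [|apply rpw_derive_pos; lra|intros; apply Rmult_comm].
  apply (is_derive_mult S g); [apply Derive_correct; auto|exact Hg|intros; apply Rmult_comm].
  unfold plus, mult; simpl. rewrite !rpw_pos by lra.
  match goal with |- ?a = ?b => change (@eq R a b) end. ring.
Qed.

Lemma Rpower_m1 x a : 0 < x -> Rpower x (a - 1) = Rpower x a / x.
Proof.
  intro Hx. replace (Rpower x a) with (Rpower x ((a - 1) + 1)) by (f_equal; ring).
  rewrite Rpower_plus, Rpower_1 by auto. field. lra.
Qed.

Lemma IBP0 al be ga A B t S : 0 < al -> 0 < be -> 0 < ga -> 0 < t < 1 -> CC1 S ->
  int01' (fun x => S x * wgt al be ga A B t x / x) (X0 al be ga A B t S).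
Proof.
  intros Hal Hbe Hga Ht HS.
  set (w := wgt al be ga A B t).
  set (reg := fun x => (Derive S x * m0 t x + S x * tau0 al be ga t x) * w x).
  set (f := fun x => reg x - al * t * (S x * w x / x)).
  assert (Hf : int01' f 0).
  { apply (int01'_ftc (fun y => S y * (1 - y) * rpw y al * rpw (1 - y) be * Gf ga A B t y)).
    - intros x Hx. eapply is_derive_eq. apply (IBP_core al be ga A B t S (fun y => 1 - y) (fun _ => -1)); auto.
      apply HS. eapply is_derive_eq. apply (is_derive_minus (fun _ => 1) (fun y => y)).
      apply is_derive_const. apply is_derive_id. unfold minus, plus, opp, zero, one; simpl. ring.
      unfold f, reg, w. rewrite wgt_eq, G_eq, !rpw_pos by lra. rewrite !Rpower_m1 by lra.
      unfold m0, tau0. Rfield. lra.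
    - intros x Hx. unfold f, reg, w, m0, tau0. cont_tac.
    - cont_tac.
    - cont_tac.
    - simpl. rewrite (rpw_npos 0) by lra. ring.
    - simpl. replace (1 - 1) with 0 by ring. ring. }
  assert (Hr : int01' reg (Mw w (fun x => Derive S x * m0 t x + S x * tau0 al be ga t x))).
  { apply int01'_cont. intros x Hx. unfold reg, w, m0, tau0. cont_tac. }
  eapply int01'_eqv.
  eapply int01'_ext; [|apply (int01'_scal (/ (al * t))); apply (int01'_plus _ _ _ _ Hr (int01'_scal (-1) _ _ Hf))].
  - intros x Hx. unfold f. field. split; lra.
  - unfold X0. fold w. field. split; lra.
Qed.

Lemma IBP1 al be ga A B t S : 0 < al -> 0 < be -> 0 < ga -> 0 < t < 1 -> CC1 S ->
  int01' (fun x => S x * wgt al be ga A B t x / (1 - x)) (X1 al be ga A B t S).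
Proof.
  intros Hal Hbe Hga Ht HS.
  set (w := wgt al be ga A B t).
  set (reg := fun x => (Derive S x * m1 t x + S x * tau1 al be ga t x) * w x).
  set (f := fun x => reg x - be * (1 - t) * (S x * w x / (1 - x))).
  assert (Hf : int01' f 0).
  { apply (int01'_ftc (fun y => S y * y * rpw y al * rpw (1 - y) be * Gf ga A B t y)).
    - intros x Hx. eapply is_derive_eq. apply (IBP_core al be ga A B t S (fun y => y) (fun _ => 1)). all: try apply HS.
auto. auto.       eapply is_derive_eq. apply (is_derive_id (K := R_AbsRing)). reflexivity.
      unfold f, reg, w. rewrite wgt_eq, G_eq, !rpw_pos by lra. rewrite !Rpower_m1 by lra.
      unfold m1, tau1. Rfield. lra.
    - intros x Hx. unfold f, reg, w, m1, tau1. cont_tac.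
    - cont_tac.
    - cont_tac.
    - simpl. ring.
    - simpl. replace (1 - 1) with 0 by ring. rewrite (rpw_npos 0) by lra. ring. }
  assert (Hr : int01' reg (Mw w (fun x => Derive S x * m1 t x + S x * tau1 al be ga t x))).
  { apply int01'_cont. intros x Hx. unfold reg, w, m1, tau1. cont_tac. }
  eapply int01'_eqv.
  eapply int01'_ext; [|apply (int01'_scal (/ (be * (1 - t)))); apply (int01'_plus _ _ _ _ Hr (int01'_scal (-1) _ _ Hf))].
  - intros x Hx. unfold f. field. split; lra.
  - unfold X1. fold w. field. split; lra.
Qed.


Definition Cont (f : R -> R) := forall x, continuous f x.

Lemma C1_Cont f : CC1 f -> Cont f.
Proof. intros H x; apply C1_cont; auto. Qed.
Lemma C1_dCont f : CC1 f -> Cont (Derive f).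
Proof. intros [_ H]; exact H. Qed.

Lemma C1_ext f g : (forall x, f x = g x) -> CC1 f -> CC1 g.
Proof.
  intros E [H1 H2]. split.
  - intro x. apply ex_derive_ext with f; auto.
  - intro x. apply continuous_ext with (Derive f). intro y. apply Derive_ext; auto. apply H2.
Qed.

Lemma C1_const c : CC1 (fun _ => c).
Proof.
  split. intro; apply ex_derive_const.
  intro x. apply continuous_ext with (fun _ => 0). intro; rewrite Derive_const; auto. apply cont_const.
Qed.

Lemma C1_id : CC1 (fun x => x).
Proof.
  split. intro; apply ex_derive_id.
  intro x. apply continuous_ext with (fun _ => 1). intro y. symmetry; apply (Derive_id y). apply cont_const.
Qed.

Lemma C1_plus f g : CC1 f -> CC1 g -> CC1 (fun x => f x + g x).
Proof.
  intros [F1 F2] [G1 G2]. split.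
  - intro; apply (ex_derive_plus f g); auto.
  - intro x. apply continuous_ext with (fun y => Derive f y + Derive g y).
    intro y. rewrite (Derive_plus f g); auto. apply cont_plus; auto.
Qed.

Lemma C1_scal c f : CC1 f -> CC1 (fun x => c * f x).
Proof.
  intros [F1 F2]. split.
  - intro; apply ex_derive_scal; auto.
  - intro x. apply continuous_ext with (fun y => c * Derive f y).
    intro y. rewrite Derive_scal; auto. apply cont_mult; auto using cont_const.
Qed.

Lemma C1_mult f g : CC1 f -> CC1 g -> CC1 (fun x => f x * g x).
Proof.
  intros HF HG. pose proof (C1_Cont f HF) as CF. pose proof (C1_Cont g HG) as CG.
  destruct HF as [F1 F2], HG as [G1 G2]. split.
  - intro; apply ex_derive_mult; auto.
  - intro x. apply continuous_ext with (fun y => Derive f y * g y + f y * Derive g y).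
    intro y. rewrite Derive_mult; auto. apply cont_plus; apply cont_mult; auto.
Qed.

Lemma C1_lin f g c : CC1 f -> CC1 g -> CC1 (fun x => f x + c * g x).
Proof. intros; apply C1_plus; auto; apply C1_scal; auto. Qed.

Lemma Derive_lin f g c x : CC1 f -> CC1 g -> Derive (fun y => f y + c * g y) x = Derive f x + c * Derive g x.
Proof.
  intros [F1 _] [G1 _]. rewrite (Derive_plus f (fun y => c * g y)); auto.
  rewrite Derive_scal; auto. apply ex_derive_scal; auto.
Qed.

Lemma Derive_mul f g x : CC1 f -> CC1 g -> Derive (fun y => f y * g y) x = Derive f x * g x + f x * Derive g x.
Proof. intros [F1 _] [G1 _]. apply Derive_mult; auto. Qed.

Lemma Mw_ext w f g : (forall x, f x = g x) -> Mw w f = Mw w g.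
Proof. intro E. unfold Mw. apply RInt_ext. intros; rewrite E; auto. Qed.

Lemma exR w f : Cont w -> Cont f -> ex_RInt (fun x => f x * w x) 0 1.
Proof.
  intros Hw Hf. apply (ex_RInt_continuous (V := R_CompleteNormedModule)). intros; apply cont_mult; auto.
Qed.

Lemma Mw_lin w f g c : Cont w -> Cont f -> Cont g ->
  Mw w (fun x => f x + c * g x) = Mw w f + c * Mw w g.
Proof.
  intros Hw Hf Hg. unfold Mw.
  rewrite (RInt_ext _ (fun x => plus (f x * w x) (scal c (g x * w x)))).
  2: { intros; unfold plus, scal; simpl; unfold mult; simpl. ring. }
  rewrite (RInt_plus (V:=R_CompleteNormedModule) (fun x => f x * w x) (fun x => scal c (g x * w x))).
  rewrite (RInt_scal (V:=R_CompleteNormedModule) (fun x => g x * w x)). unfold plus, scal; simpl; unfold mult; simpl. ring.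
  apply exR; auto. apply exR; auto. apply (ex_RInt_scal (V := R_NormedModule)). apply exR; auto.
Qed.

Lemma Mw_scal w f c : Cont w -> Cont f -> Mw w (fun x => c * f x) = c * Mw w f.
Proof.
  intros Hw Hf. rewrite (Mw_ext w _ (fun x => (fun _ => 0) x + c * f x)) by (intro; ring).
  rewrite Mw_lin; auto. unfold Mw. rewrite (RInt_ext _ (fun _ => 0)) by (intros; Rring).
  rewrite RInt_const. unfold scal; simpl; unfold mult; simpl. ring. intro; apply cont_const.
Qed.

Lemma Mw_plus w f g : Cont w -> Cont f -> Cont g -> Mw w (fun x => f x + g x) = Mw w f + Mw w g.
Proof.
  intros. rewrite (Mw_ext w _ (fun x => f x + 1 * g x)) by (intro; Rring). rewrite Mw_lin; auto. ring.
Qed.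

Lemma Mw_zero w : Mw w (fun _ => 0) = 0.
Proof. unfold Mw. rewrite (RInt_ext _ (fun _ => 0)) by (intros; Rring). rewrite RInt_const. unfold scal; simpl; unfold mult; simpl. ring. Qed.


Definition OPH (w : R -> R) (P : nat -> R -> R) (an bn : nat -> R) :=
  Cont w /\ (forall k, CC1 (P k)) /\
  (forall j k, j <> k -> Mw w (fun x => P j x * P k x) = 0) /\
  recurrence P an bn /\ (forall x, P 0%nat x = 1).

Definition bq (bn : nat -> R) k := match k with O => 0 | _ => bn k end.
Definition hh w (P : nat -> R -> R) k := Mw w (fun x => P k x * P k x).

Ltac ctac :=
  match goal with
  | |- Cont _ => let x := fresh "x" in intro x; ctac
  | |- continuous (fun _ => ?c) ?x => apply (cont_const c x)
  | |- continuous (fun y => y) ?x => apply (cont_id x)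
  | |- continuous (fun y => @?f y + @?g y) ?x => apply (cont_plus f g x); ctac
  | |- continuous (fun y => @?f y - @?g y) ?x => apply (cont_minus f g x); ctac
  | |- continuous (fun y => @?f y * @?g y) ?x => apply (cont_mult f g x); ctac
  | |- continuous (fun y => - @?f y) ?x => apply (cont_opp f x); ctac
  | H : forall k, CC1 (?P k) |- continuous (fun y => ?P ?k y) ?x => apply (C1_cont _ x (H k))
  | H : forall k, CC1 (?P k) |- continuous (?P ?k) ?x => apply (C1_cont _ x (H k))
  | H : forall k, CC1 (?P k) |- continuous (fun y => Derive (?P ?k) y) ?x => apply (proj2 (H k) x)
  | H : forall k, CC1 (?P k) |- continuous (Derive (?P ?k)) ?x => apply (proj2 (H k) x)
  | H : Cont ?f |- continuous ?f ?x => apply (H x)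
  | H : Cont ?f |- continuous (fun y => ?f y) ?x => apply (H x)
  | _ => idtac
  end.


Lemma rec_all w P an bn : OPH w P an bn ->
  forall k x, x * P k x = P (S k) x + an k * P k x + bq bn k * P (pred k) x.
Proof.
  intros [_ [_ [_ [[R0 R1] _]]]] k x. destruct k.
  - simpl. rewrite R0. ring.
  - rewrite R1 by lia. simpl. ring.
Qed.

Lemma P_succ w P an bn : OPH w P an bn ->
  forall k x, P (S k) x = (x - an k) * P k x - bq bn k * P (pred k) x.
Proof. intros H k x. pose proof (rec_all w P an bn H k x). lra. Qed.

Definition Orth w (P : nat -> R -> R) k f :=
  Cont f /\ forall m, (k < m)%nat -> Mw w (fun x => P m x * f x) = 0.

Lemma Orth_P w P an bn k : OPH w P an bn -> Orth w P k (P k).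
Proof.
  intros H. destruct H as [Hw [HC [HO _]]]. split. ctac.
  intros m Hm. apply HO. lia.
Qed.

Lemma Orth_mono w P k k' f : (k <= k')%nat -> Orth w P k f -> Orth w P k' f.
Proof. intros Hk [C H]. split; auto. intros; apply H; lia. Qed.

Lemma Orth_ext w P k f g : (forall x, f x = g x) -> Orth w P k f -> Orth w P k g.
Proof.
  intros E [C H]. split. intro x; apply continuous_ext with f; auto.
  intros m Hm. rewrite <- (H m Hm). apply Mw_ext. intro; rewrite E; auto.
Qed.

Lemma Orth_lin w P an bn k f g c : OPH w P an bn -> Orth w P k f -> Orth w P k g ->
  Orth w P k (fun x => f x + c * g x).
Proof.
  intros H [Cf Hf] [Cg Hg]. destruct H as [Hw [HC _]]. split. ctac.
  intros m Hm. rewrite (Mw_ext w _ (fun x => P m x * f x + c * (P m x * g x))) by (intro; ring).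
  rewrite Mw_lin by ctac. rewrite Hf, Hg by auto. ring.
Qed.

Lemma Orth_zero w P k : Orth w P k (fun _ => 0).
Proof.
  split. intro; apply cont_const. intros. rewrite (Mw_ext w _ (fun _ => 0)) by (intro; ring). apply Mw_zero.
Qed.

Lemma Orth_const w P an bn k c : OPH w P an bn -> Orth w P k (fun _ => c).
Proof.
  intros H. apply Orth_mono with 0%nat. lia.
  apply Orth_ext with (fun x => (fun _ => 0) x + c * P 0%nat x).
  intro x. destruct H as [_ [_ [_ [_ H0]]]]. rewrite H0. ring.
  apply Orth_lin with an bn; auto. apply Orth_zero. apply Orth_P with an bn; auto.
Qed.

Lemma Orth_x w P an bn k f : OPH w P an bn -> Orth w P k f -> Orth w P (S k) (fun x => x * f x).
Proof.
  intros H [Cf Hf]. pose proof H as H'. destruct H' as [Hw [HC _]]. split. ctac.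
  intros m Hm.
  rewrite (Mw_ext w _ (fun x => P (S m) x * f x + an m * (P m x * f x) + bq bn m * (P (pred m) x * f x))).
  2: { intro x. replace (P m x * (x * f x)) with ((x * P m x) * f x) by ring.
        rewrite (rec_all w P an bn H). ring. }
  rewrite Mw_lin by ctac. rewrite Mw_lin by ctac. rewrite !Hf by lia. ring.
Qed.

Lemma Derive_id' x : Derive (fun y => y) x = 1.
Proof. exact (Derive_id x). Qed.

Lemma D_zero w P an bn : OPH w P an bn -> forall x, Derive (P 0%nat) x = 0.
Proof.
  intros H x. destruct H as [_ [_ [_ [_ H0]]]].
  rewrite (Derive_ext _ (fun _ => 1)) by auto. apply Derive_const.
Qed.

Lemma D_succ w P an bn : OPH w P an bn -> forall k x,
  Derive (P (S k)) x = P k x + (x - an k) * Derive (P k) x - bq bn k * Derive (P (pred k)) x.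
Proof.
  intros H k x. pose proof H as H'. destruct H' as [Hw [HC _]].
  rewrite (Derive_ext _ (fun y => (y - an k) * P k y + (- bq bn k) * P (pred k) y)).
  2: { intro y. rewrite (P_succ w P an bn H). ring. }
  assert (Cl : CC1 (fun y => y - an k)).
  { apply C1_ext with (fun y => y + (-1) * (fun _ => an k) y). intro; simpl; ring.
    apply C1_lin. apply C1_id. apply C1_const. }
  rewrite Derive_lin; auto. rewrite Derive_mul; auto.
  rewrite (Derive_ext (fun y => y - an k) (fun y => y + (-1) * (fun _ => an k) y)) by (intro; simpl; ring).
  rewrite Derive_lin. rewrite Derive_const. rewrite Derive_id'. ring. apply C1_id. apply C1_const.
  apply C1_mult; auto.
Qed.

Lemma D_orth w P an bn : OPH w P an bn -> forall k, Orth w P (pred k) (Derive (P k)).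
Proof.
  intros H. pose proof H as H'. destruct H' as [Hw [HC _]].
  assert (forall k, Orth w P (pred k) (Derive (P k)) /\ Orth w P (pred (S k)) (Derive (P (S k)))).
  { induction k.
    - split. apply Orth_ext with (fun _ => 0). intro; symmetry; apply (D_zero w P an bn H). apply Orth_zero.
      apply Orth_ext with (fun _ => 1). intro x. rewrite (D_succ w P an bn H). rewrite (D_zero w P an bn H).
      cbn [Nat.pred bq]. destruct H as [_ [_ [_ [_ H0]]]]. rewrite H0. ring. apply Orth_const with an bn; auto.
    - destruct IHk as [IH1 IH2]. split; auto. cbn [Nat.pred] in *.
      apply Orth_ext with (fun x => ((P (S k) x + 1 * (x * Derive (P (S k)) x)) + (-an (S k)) * Derive (P (S k)) x)
                                     + (- bq bn (S k)) * Derive (P k) x).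
      intro x. rewrite (D_succ w P an bn H (S k)). cbn [Nat.pred]. ring.
      assert (A1 : Orth w P (S k) (Derive (P (S k)))) by (apply Orth_mono with k; auto).
      assert (A2 : Orth w P (S k) (fun x => x * Derive (P (S k)) x)) by (apply Orth_x with an bn; auto).
      assert (A3 : Orth w P (S k) (Derive (P k))) by (apply Orth_mono with (pred k); auto; lia).
      (apply Orth_lin with an bn; [exact H| |exact A3]). (apply Orth_lin with an bn; [exact H| |exact A1]). (apply Orth_lin with an bn; [exact H| |exact A2]). apply Orth_P with an bn; exact H. }
  intro k. exact (proj1 (H0 k)).
Qed.

Lemma Orth_scal w P an bn k f c : OPH w P an bn -> Orth w P k f -> Orth w P k (fun x => c * f x).
Proof.
  intros H Hf. apply Orth_ext with (fun x => (fun _ => 0) x + c * f x). intro; ring.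
  apply Orth_lin with an bn; auto. apply Orth_zero.
Qed.

Definition EE (P : nat -> R -> R) k x := x * Derive (P k) x - INR k * P k x.

Lemma E_orth w P an bn : OPH w P an bn -> forall k, Orth w P (pred k) (EE P k).
Proof.
  intros H. pose proof H as H'. destruct H' as [Hw [HC [_ [_ H0]]]].
  assert (forall k, Orth w P (pred k) (EE P k) /\ Orth w P (pred (S k)) (EE P (S k))).
  { induction k.
    - split.
      + apply Orth_ext with (fun _ => 0). intro x. unfold EE. rewrite (D_zero w P an bn H). simpl. ring.
        apply Orth_zero.
      + apply Orth_ext with (fun _ => an 0%nat). intro x. unfold EE. rewrite (D_succ w P an bn H).
        rewrite (D_zero w P an bn H), (P_succ w P an bn H). cbn [Nat.pred bq]. rewrite H0. simpl. ring.
        apply Orth_const with an bn; auto.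
    - destruct IHk as [IH1 IH2]. split; auto. cbn [Nat.pred] in *.
      apply Orth_ext with (fun x => (((an (S k) * P (S k) x + 1 * (x * EE P (S k) x)) + (- an (S k)) * EE P (S k) x)
                                     + (- bq bn (S k)) * EE P k x) + (bq bn (S k) * (INR (S k) + 1 - INR k)) * P k x).
      { intro x. unfold EE. rewrite (D_succ w P an bn H (S k)), (P_succ w P an bn H (S k)). cbn [Nat.pred].
        rewrite (S_INR (S k)). ring. }
      assert (A1 : Orth w P (S k) (EE P (S k))) by (apply Orth_mono with k; auto).
      assert (A2 : Orth w P (S k) (fun x => x * EE P (S k) x)) by (apply Orth_x with an bn; auto).
      assert (A3 : Orth w P (S k) (EE P k)) by (apply Orth_mono with (pred k); auto; lia).
      assert (A4 : Orth w P (S k) (P k)) by (apply Orth_mono with k; [lia|apply Orth_P with an bn; exact H]).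
      assert (A5 : Orth w P (S k) (P (S k))) by (apply Orth_P with an bn; exact H).
      apply Orth_lin with an bn; [exact H| |exact A4].
      apply Orth_lin with an bn; [exact H| |exact A3].
      apply Orth_lin with an bn; [exact H| |exact A1].
      apply Orth_lin with an bn; [exact H| |exact A2].
      apply Orth_scal with an bn; [exact H|exact A5]. }
  intro k. exact (proj1 (H1 k)).
Qed.

Definition FF (P : nat -> R -> R) k x := Derive (P k) x - INR k * P (pred k) x.

Lemma F_orth w P an bn : OPH w P an bn -> forall k, Orth w P (pred (pred k)) (FF P k).
Proof.
  intros H. pose proof H as H'. destruct H' as [Hw [HC [_ [_ H0]]]].
  assert (forall k, Orth w P (pred (pred k)) (FF P k) /\ Orth w P (pred (pred (S k))) (FF P (S k))).
  { induction k.
    - split.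
      + apply Orth_ext with (fun _ => 0). intro x. unfold FF. rewrite (D_zero w P an bn H). simpl. ring.
        apply Orth_zero.
      + apply Orth_ext with (fun _ => 0). intro x. unfold FF. rewrite (D_succ w P an bn H).
        rewrite (D_zero w P an bn H). cbn [Nat.pred bq]. rewrite H0. simpl. ring.
        apply Orth_zero.
    - destruct IHk as [IH1 IH2]. split; auto. cbn [Nat.pred] in *.
      apply Orth_ext with (fun x => ((((INR (S k) * (an k - an (S k))) * P k x + (INR (S k) * bq bn k) * P (pred k) x)
                        + 1 * (x * FF P (S k) x)) + (- an (S k)) * FF P (S k) x) + (- bq bn (S k)) * Derive (P k) x).
      { intro x. unfold FF. rewrite (D_succ w P an bn H (S k)). cbn [Nat.pred].
        assert (E : x * P k x = P (S k) x + an k * P k x + bq bn k * P (pred k) x) by apply (rec_all w P an bn H).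
        rewrite (S_INR (S k)). 
        replace ((x - an (S k)) * Derive (P (S k)) x) with ((x - an (S k)) * (Derive (P (S k)) x - INR (S k) * P k x) + INR (S k) * (x * P k x) - INR (S k) * an (S k) * P k x) by ring.
        rewrite E. ring. }
      assert (A1 : Orth w P k (FF P (S k))).
      { destruct k. apply Orth_ext with (fun _ => 0). intro x. unfold FF. rewrite (D_succ w P an bn H), (D_zero w P an bn H).
        cbn [Nat.pred bq]. rewrite H0. simpl. ring. apply Orth_zero. apply Orth_mono with k; auto. }
      assert (A2 : Orth w P k (fun x => x * FF P (S k) x)).
      { destruct k. apply Orth_ext with (fun _ => 0). intro x. unfold FF. rewrite (D_succ w P an bn H), (D_zero w P an bn H).
        cbn [Nat.pred bq]. rewrite H0. simpl. ring. apply Orth_zero. apply Orth_x with an bn; auto. }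
      assert (A3 : Orth w P k (Derive (P k))) by (apply Orth_mono with (pred k); [lia|apply (D_orth w P an bn H)]).
      assert (A4 : Orth w P k (P k)) by (apply Orth_P with an bn; exact H).
      assert (A5 : Orth w P k (P (pred k))) by (apply Orth_mono with (pred k); [lia|apply Orth_P with an bn; exact H]).
      apply Orth_lin with an bn; [exact H| |exact A3].
      apply Orth_lin with an bn; [exact H| |exact A1].
      apply Orth_lin with an bn; [exact H| |exact A2].
      apply Orth_lin with an bn; [exact H| |exact A5].
      apply Orth_scal with an bn; [exact H|exact A4]. }
  intro k. exact (proj1 (H1 k)).
Qed.


Lemma orth_app w P k f m : Orth w P k f -> (k < m)%nat -> Mw w (fun x => P m x * f x) = 0.
Proof. intros [_ H] Hm; apply H; auto. Qed.

Lemma M_PP w P an bn j k : OPH w P an bn -> j <> k -> Mw w (fun x => P j x * P k x) = 0.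
Proof. intros [_ [_ [HO _]]] Hjk. apply HO; auto. Qed.

Lemma hh_succ w P an bn : OPH w P an bn -> forall k, bn (S k) * hh w P k = hh w P (S k).
Proof.
  intros H k. pose proof H as H'. destruct H' as [Hw [HC [HO [_ H0]]]].
  assert (E1 : Mw w (fun x => x * P (S k) x * P k x) = hh w P (S k)).
  { rewrite (Mw_ext w _ (fun x => (P (S k) x * P (S k) x + an k * (P (S k) x * P k x)) + bq bn k * (P (S k) x * P (pred k) x))).
    2: { intro x. replace (x * P (S k) x * P k x) with (P (S k) x * (x * P k x)) by ring.
         rewrite (rec_all w P an bn H). ring. }
    rewrite Mw_lin by ctac. rewrite Mw_lin by ctac. rewrite (HO (S k) k), (HO (S k) (pred k)) by lia. unfold hh. ring. }
  assert (E2 : Mw w (fun x => x * P (S k) x * P k x) = bn (S k) * hh w P k).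
  { rewrite (Mw_ext w _ (fun x => (P k x * P (S (S k)) x + an (S k) * (P k x * P (S k) x)) + bq bn (S k) * (P k x * P k x))).
    2: { intro x. replace (x * P (S k) x * P k x) with (P k x * (x * P (S k) x)) by ring.
         rewrite (rec_all w P an bn H). cbn [Nat.pred]. ring. }
    rewrite Mw_lin by ctac. rewrite Mw_lin by ctac. rewrite (HO k (S (S k))), (HO k (S k)) by lia. unfold hh. change (bq bn (S k)) with (bn (S k)). ring. }
  rewrite <- E1, E2. auto.
Qed.

Lemma M_xPP w P an bn k : OPH w P an bn -> Mw w (fun x => x * P k x * P k x) = an k * hh w P k.
Proof.
  intros H. pose proof H as H'. destruct H' as [Hw [HC [HO [_ H0]]]].
  rewrite (Mw_ext w _ (fun x => (P k x * P (S k) x + an k * (P k x * P k x)) + bq bn k * (P k x * P (pred k) x))).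
  2: { intro x. replace (x * P k x * P k x) with (P k x * (x * P k x)) by ring.
       rewrite (rec_all w P an bn H). ring. }
  rewrite Mw_lin by ctac. rewrite Mw_lin by ctac. rewrite (HO k (S k)) by lia. unfold hh.
  destruct k. simpl. ring. rewrite (HO (S k) (pred (S k))) by (simpl; lia). ring.
Qed.

Lemma M_P w P an bn k : OPH w P an bn -> (1 <= k)%nat -> Mw w (P k) = 0.
Proof.
  intros H Hk. pose proof H as H'. destruct H' as [Hw [HC [HO [_ H0]]]].
  rewrite (Mw_ext w _ (fun x => P k x * P 0%nat x)). apply HO; lia. intro; rewrite H0; ring.
Qed.

Lemma hh0 w P an bn : OPH w P an bn -> Mw w (fun _ => 1) = hh w P 0.
Proof.
  intros H. destruct H as [Hw [HC [HO [_ H0]]]]. unfold hh. apply Mw_ext. intro; rewrite H0; ring.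
Qed.

Lemma M_PD_same w P an bn k : OPH w P an bn -> Mw w (fun x => P k x * Derive (P k) x) = 0.
Proof.
  intros H. destruct k.
  - rewrite (Mw_ext w _ (fun _ => 0)). apply Mw_zero. intro; rewrite (D_zero w P an bn H); ring.
  - apply (orth_app w P (pred (S k))). apply (D_orth w P an bn H). simpl; lia.
Qed.

Lemma M_PxD_same w P an bn k : OPH w P an bn -> Mw w (fun x => P k x * (x * Derive (P k) x)) = INR k * hh w P k.
Proof.
  intros H. pose proof H as H'. destruct H' as [Hw [HC [HO [_ H0]]]].
  rewrite (Mw_ext w _ (fun x => P k x * EE P k x + INR k * (P k x * P k x))).
  2: { intro; unfold EE; ring. }
  rewrite Mw_lin by (unfold EE; ctac). unfold hh.
  destruct k.
  - rewrite (Mw_ext w (fun x => P 0%nat x * EE P 0 x) (fun _ => 0)). rewrite Mw_zero. simpl; ring.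
    intro; unfold EE; rewrite (D_zero w P an bn H); simpl; ring.
  - rewrite (orth_app w P (pred (S k))). ring. apply (E_orth w P an bn H). simpl; lia.
Qed.

Lemma M_PD_pred w P an bn n : OPH w P an bn -> (1 <= n)%nat ->
  Mw w (fun x => Derive (P n) x * P (pred n) x) = INR n * hh w P (pred n).
Proof.
  intros H Hn. pose proof H as H'. destruct H' as [Hw [HC [HO [_ H0]]]].
  rewrite (Mw_ext w _ (fun x => P (pred n) x * FF P n x + INR n * (P (pred n) x * P (pred n) x))).
  2: { intro; unfold FF; ring. }
  rewrite Mw_lin by (unfold FF; ctac). unfold hh.
  destruct n as [|[|n]]; [lia| |].
  - rewrite (Mw_ext w (fun x => P (pred 1) x * FF P 1 x) (fun _ => 0)). rewrite Mw_zero. ring.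
    intro x. unfold FF. rewrite (D_succ w P an bn H), (D_zero w P an bn H). cbn [Nat.pred bq]. rewrite H0. simpl. ring.
  - rewrite (orth_app w P (pred (pred (S (S n))))). ring. apply (F_orth w P an bn H). simpl; lia.
Qed.

Lemma M_P_Dpred w P an bn n : OPH w P an bn ->
  Mw w (fun x => P n x * Derive (P (pred n)) x) = 0 /\ Mw w (fun x => P n x * (x * Derive (P (pred n)) x)) = 0.
Proof.
  intros H. destruct n as [|[|n]].
  - split; rewrite (Mw_ext w _ (fun _ => 0)); try apply Mw_zero; intro; simpl; rewrite (D_zero w P an bn H); ring.
  - split; rewrite (Mw_ext w _ (fun _ => 0)); try apply Mw_zero; intro; simpl; rewrite (D_zero w P an bn H); ring.
  - split.
    + apply (orth_app w P (pred (pred (S (S n))))). apply (D_orth w P an bn H). simpl; lia.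
    + apply (orth_app w P (S (pred (pred (S (S n)))))). apply (Orth_x w P an bn). auto. apply (D_orth w P an bn H). simpl; lia.
Qed.

Lemma M_xxPD w P an bn n : OPH w P an bn -> (1 <= n)%nat ->
  Mw w (fun x => x * x * P n x * Derive (P n) x)
  = INR n * an n * hh w P n + bn n * Mw w (fun x => x * Derive (P n) x * P (pred n) x).
Proof.
  intros H Hn. pose proof H as H'. destruct H' as [Hw [HC [HO [_ H0]]]].
  assert (Hb : bq bn n = bn n) by (destruct n; [lia|reflexivity]).
  rewrite (Mw_ext w _ (fun x => (((P (S n) x * EE P n x + INR n * (P (S n) x * P n x))
      + an n * (P n x * EE P n x)) + (an n * INR n) * (P n x * P n x))
      + bq bn n * (P (pred n) x * (x * Derive (P n) x)))).
  2: { intro x. replace (x * x * P n x * Derive (P n) x) with ((x * P n x) * (x * Derive (P n) x)) by ring.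
       rewrite (rec_all w P an bn H). unfold EE. ring. }
  repeat (rewrite Mw_lin by (unfold EE; ctac)).
  rewrite (orth_app w P (pred n) (EE P n) (S n)) by (apply (E_orth w P an bn H) || lia).
  rewrite (orth_app w P (pred n) (EE P n) n) by (apply (E_orth w P an bn H) || lia).
  rewrite (HO (S n) n) by lia. rewrite Hb. unfold hh.
  rewrite (Mw_ext w (fun x => P (pred n) x * (x * Derive (P n) x)) (fun x => x * Derive (P n) x * P (pred n) x)) by (intro; ring).
  ring.
Qed.


Definition PhiH w (Phi : (R -> R) -> R) (z : R) :=
  (forall f g c, CC1 f -> CC1 g -> Phi (fun x => f x + c * g x) = Phi f + c * Phi g) /\
  (forall f g, (forall x, f x = g x) -> Phi f = Phi g) /\
  (forall f, CC1 f -> Phi (fun x => (x - z) * f x) = Mw w f).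

Lemma C1_affine z : CC1 (fun x => x - z).
Proof.
  apply C1_ext with (fun y => y + (-1) * (fun _ => z) y). intro; simpl; ring.
  apply C1_lin. apply C1_id. apply C1_const.
Qed.

Lemma CPP w P an bn j k : OPH w P an bn -> CC1 (fun x => P j x * P k x).
Proof. intros [_ [HC _]]. apply C1_mult; auto. Qed.

Lemma G1_step w P an bn Phi z n j : OPH w P an bn -> PhiH w Phi z -> (S j <= n)%nat ->
  Phi (fun x => P n x * P j x) = P j z * Phi (P n) ->
  Phi (fun x => P n x * P (pred j) x) = P (pred j) z * Phi (P n) ->
  Phi (fun x => P n x * P (S j) x) = P (S j) z * Phi (P n).
Proof.
  intros H [Plin [Pext P1]] Hj Q1 Q2. pose proof H as H'. destruct H' as [Hw [HC [HO _]]].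
  rewrite (Pext _ (fun x => ((x - z) * (P n x * P j x) + (z - an j) * (P n x * P j x)) + (- bq bn j) * (P n x * P (pred j) x))).
  2: { intro x. rewrite (P_succ w P an bn H). ring. }
  rewrite Plin; [|apply C1_lin; [apply C1_mult; [apply C1_affine|apply (CPP w P an bn); auto]|apply (CPP w P an bn); auto]|apply (CPP w P an bn); auto].
  rewrite Plin; [|apply C1_mult; [apply C1_affine|apply (CPP w P an bn); auto]|apply (CPP w P an bn); auto].
  rewrite P1 by (apply (CPP w P an bn); auto). rewrite (HO n j) by lia.
  rewrite Q1, Q2. rewrite (P_succ w P an bn H). ring.
Qed.

Lemma G1 w P an bn Phi z n : OPH w P an bn -> PhiH w Phi z ->
  forall k, (k <= n)%nat -> Phi (fun x => P n x * P k x) = P k z * Phi (P n).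
Proof.
  intros H HPhi. pose proof HPhi as [Plin [Pext P1]]. pose proof H as H'. destruct H' as [Hw [HC [HO [_ H0]]]].
  assert (Q0 : Phi (fun x => P n x * P 0%nat x) = P 0%nat z * Phi (P n)).
  { rewrite H0. rewrite (Pext _ (P n)). ring. intro; rewrite H0; ring. }
  assert (forall k, ((k <= n)%nat -> Phi (fun x => P n x * P k x) = P k z * Phi (P n)) /\
                    ((S k <= n)%nat -> Phi (fun x => P n x * P (S k) x) = P (S k) z * Phi (P n))).
  { induction k.
    - split; intros; auto. apply (G1_step w P an bn Phi z n 0); auto.
    - destruct IHk as [I1 I2]. split; auto. intros. apply (G1_step w P an bn Phi z n (S k)); auto.
      apply I2; lia. apply I1; lia. }
  intros k Hk. exact (proj1 (H1 k) Hk).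
Qed.

Lemma CD w P an bn Phi z : OPH w P an bn -> PhiH w Phi z ->
  forall k, P k z * Phi (P (S k)) - P (S k) z * Phi (P k) = hh w P k.
Proof.
  intros H HPhi. pose proof HPhi as [Plin [Pext P1]]. pose proof H as H'. destruct H' as [Hw [HC [HO [_ H0]]]].
  assert (Ez : forall j, Phi (P (S j)) = Mw w (P j) + (z - an j) * Phi (P j) - bq bn j * Phi (P (pred j))).
  { intro j. rewrite (Pext _ (fun x => ((x - z) * P j x + (z - an j) * P j x) + (- bq bn j) * P (pred j) x)).
    2: { intro x. rewrite (P_succ w P an bn H). ring. }
    rewrite Plin; [|apply C1_lin; [apply C1_mult; [apply C1_affine|auto]|auto]|auto].
    rewrite Plin; [|apply C1_mult; [apply C1_affine|auto]|auto].
    rewrite P1 by auto. ring. }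
  induction k.
  - rewrite Ez. cbn [bq]. rewrite H0, (P_succ w P an bn H), H0. cbn [bq]. unfold hh.
    rewrite (Mw_ext w (fun x => P 0%nat x * P 0%nat x) (P 0%nat)) by (intro; rewrite H0; ring). ring.
  - rewrite Ez. rewrite (P_succ w P an bn H (S k)). cbn [Nat.pred].
    change (bq bn (S k)) with (bn (S k)). rewrite (M_P w P an bn (S k) H) by lia.
    rewrite <- (hh_succ w P an bn H k). rewrite <- IHk. ring.
Qed.

Lemma Key w P an bn Phi z n : OPH w P an bn -> PhiH w Phi z -> (1 <= n)%nat ->
  Phi (fun x => P n x * P (pred n) x) ^ 2 - hh w P (pred n) * Phi (fun x => P n x * P (pred n) x)
  = Phi (fun x => P n x * P n x) * Phi (fun x => P (pred n) x * P (pred n) x).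
Proof.
  intros H HPhi Hn.
  rewrite (G1 w P an bn Phi z n H HPhi (pred n)) by lia.
  rewrite (G1 w P an bn Phi z n H HPhi n) by lia.
  rewrite (G1 w P an bn Phi z (pred n) H HPhi (pred n)) by lia.
  pose proof (CD w P an bn Phi z H HPhi (pred n)) as E.
  replace (S (pred n)) with n in E by lia. rewrite <- E. ring.
Qed.


Definition Prm al be ga (t : R) := 0 < al /\ 0 < be /\ 0 < ga /\ 0 < t < 1.

Lemma CW al be ga A B t : Prm al be ga t -> Cont (wgt al be ga A B t).
Proof. intros [? [? [? ?]]] x. apply wgt_cont; auto. Qed.

Lemma Mw_lin_gen al be ga A B t (f g : R -> R) c :
  Prm al be ga t -> Cont f -> Cont g ->
  Mw (wgt al be ga A B t) (fun x => f x + c * g x) = Mw (wgt al be ga A B t) f + c * Mw (wgt al be ga A B t) g.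
Proof. intros Hp Hf Hg. apply Mw_lin; auto. apply CW; auto. Qed.

Lemma X0_lin al be ga A B t f g c : Prm al be ga t -> CC1 f -> CC1 g ->
  X0 al be ga A B t (fun x => f x + c * g x) = X0 al be ga A B t f + c * X0 al be ga A B t g.
Proof.
  intros Hp Hf Hg. pose proof Hp as [Hal [Hbe [Hga Ht]]]. unfold X0.
  rewrite (Mw_ext _ _ (fun x => (Derive f x * m0 t x + f x * tau0 al be ga t x) + c * (Derive g x * m0 t x + g x * tau0 al be ga t x))).
  2: { intro x. rewrite Derive_lin by auto. ring. }
  rewrite Mw_lin_gen; auto. field. split; lra.
  all: pose proof (C1_Cont _ Hf); pose proof (C1_Cont _ Hg); pose proof (C1_dCont _ Hf); pose proof (C1_dCont _ Hg); unfold m0, tau0; ctac.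
Qed.

Lemma X1_lin al be ga A B t f g c : Prm al be ga t -> CC1 f -> CC1 g ->
  X1 al be ga A B t (fun x => f x + c * g x) = X1 al be ga A B t f + c * X1 al be ga A B t g.
Proof.
  intros Hp Hf Hg. pose proof Hp as [Hal [Hbe [Hga Ht]]]. unfold X1.
  rewrite (Mw_ext _ _ (fun x => (Derive f x * m1 t x + f x * tau1 al be ga t x) + c * (Derive g x * m1 t x + g x * tau1 al be ga t x))).
  2: { intro x. rewrite Derive_lin by auto. ring. }
  rewrite Mw_lin_gen; auto. field. split; lra.
  all: pose proof (C1_Cont _ Hf); pose proof (C1_Cont _ Hg); pose proof (C1_dCont _ Hf); pose proof (C1_dCont _ Hg); unfold m1, tau1; ctac.
Qed.

Lemma X0_ext al be ga A B t f g : (forall x, f x = g x) -> X0 al be ga A B t f = X0 al be ga A B t g.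
Proof. intro E. unfold X0. f_equal. apply Mw_ext. intro x. rewrite (Derive_ext f g) by auto. rewrite E. auto. Qed.
Lemma X1_ext al be ga A B t f g : (forall x, f x = g x) -> X1 al be ga A B t f = X1 al be ga A B t g.
Proof. intro E. unfold X1. f_equal. apply Mw_ext. intro x. rewrite (Derive_ext f g) by auto. rewrite E. auto. Qed.

Lemma C1_xf f : CC1 f -> CC1 (fun x => x * f x).
Proof. intros; apply C1_mult; auto; apply C1_id. Qed.
Lemma C1_1mxf f : CC1 f -> CC1 (fun x => (1 - x) * f x).
Proof.
  intros; apply C1_mult; auto. apply C1_ext with (fun y => (fun _ => 1) y + (-1) * y). intro; simpl; ring.
  apply C1_lin. apply C1_const. apply C1_id.
Qed.

Lemma X0_P1 al be ga A B t f : Prm al be ga t -> CC1 f ->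
  X0 al be ga A B t (fun x => x * f x) = Mw (wgt al be ga A B t) f.
Proof.
  intros Hp Hf. pose proof Hp as [Hal [Hbe [Hga Ht]]].
  pose proof (IBP0 al be ga A B t (fun x => x * f x) Hal Hbe Hga Ht (C1_xf f Hf)) as I1.
  assert (I2 : int01' (fun x => f x * wgt al be ga A B t x) (Mw (wgt al be ga A B t) f)).
  { apply int01'_cont. intros x _. pose proof (C1_Cont _ Hf). apply cont_mult. auto. apply wgt_cont; auto. }
  apply (int01'_unique _ _ _ I1). eapply int01'_ext; [|exact I2]. intros x Hx. simpl. field. lra.
Qed.

Lemma X1_P1 al be ga A B t f : Prm al be ga t -> CC1 f ->
  X1 al be ga A B t (fun x => (1 - x) * f x) = Mw (wgt al be ga A B t) f.
Proof.
  intros Hp Hf. pose proof Hp as [Hal [Hbe [Hga Ht]]].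
  pose proof (IBP1 al be ga A B t (fun x => (1 - x) * f x) Hal Hbe Hga Ht (C1_1mxf f Hf)) as I1.
  assert (I2 : int01' (fun x => f x * wgt al be ga A B t x) (Mw (wgt al be ga A B t) f)).
  { apply int01'_cont. intros x _. pose proof (C1_Cont _ Hf). apply cont_mult. auto. apply wgt_cont; auto. }
  apply (int01'_unique _ _ _ I1). eapply int01'_ext; [|exact I2]. intros x Hx. simpl. field. lra.
Qed.

Lemma X0_zero al be ga A B t : Prm al be ga t -> X0 al be ga A B t (fun _ => 0) = 0.
Proof.
  intros Hp. unfold X0. rewrite (Mw_ext _ _ (fun _ => 0)). rewrite Mw_zero. unfold Rdiv; ring.
  intro x. rewrite Derive_const. ring.
Qed.
Lemma X1_zero al be ga A B t : Prm al be ga t -> X1 al be ga A B t (fun _ => 0) = 0.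
Proof.
  intros Hp. unfold X1. rewrite (Mw_ext _ _ (fun _ => 0)). rewrite Mw_zero. unfold Rdiv; ring.
  intro x. rewrite Derive_const. ring.
Qed.

Lemma X0_scal al be ga A B t f c : Prm al be ga t -> CC1 f -> X0 al be ga A B t (fun x => c * f x) = c * X0 al be ga A B t f.
Proof.
  intros Hp Hf. rewrite (X0_ext _ _ _ _ _ _ _ (fun x => (fun _ => 0) x + c * f x)) by (intro; ring).
  rewrite X0_lin; auto. rewrite X0_zero; auto. ring. apply C1_const.
Qed.
Lemma X1_scal al be ga A B t f c : Prm al be ga t -> CC1 f -> X1 al be ga A B t (fun x => c * f x) = c * X1 al be ga A B t f.
Proof.
  intros Hp Hf. rewrite (X1_ext _ _ _ _ _ _ _ (fun x => (fun _ => 0) x + c * f x)) by (intro; ring).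
  rewrite X1_lin; auto. rewrite X1_zero; auto. ring. apply C1_const.
Qed.

Lemma Eid al be ga A B t S : Prm al be ga t -> CC1 S ->
  al * t * X0 al be ga A B t S + be * (1 - t) * X1 al be ga A B t S
  = Mw (wgt al be ga A B t) (fun x => Derive S x * (x - t)) + (al + be + ga + 1) * Mw (wgt al be ga A B t) S.
Proof.
  intros Hp HS. pose proof Hp as [Hal [Hbe [Hga Ht]]]. unfold X0, X1.
  pose proof (C1_Cont _ HS). pose proof (C1_dCont _ HS).
  rewrite <- Mw_lin_gen by (auto; ctac).
  replace (al * t * (Mw (wgt al be ga A B t) (fun x => Derive S x * m0 t x + S x * tau0 al be ga t x) / (al * t)) +
   be * (1 - t) * (Mw (wgt al be ga A B t) (fun x => Derive S x * m1 t x + S x * tau1 al be ga t x) / (be * (1 - t))))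
   with (Mw (wgt al be ga A B t) (fun x => Derive S x * m0 t x + S x * tau0 al be ga t x) + 1 *
   Mw (wgt al be ga A B t) (fun x => Derive S x * m1 t x + S x * tau1 al be ga t x)) by (field; split; lra).
  rewrite <- Mw_lin_gen by (auto; unfold m0, m1, tau0, tau1; ctac).
  apply Mw_ext. intro x. unfold m0, m1, tau0, tau1. ring.
Qed.

Definition Phit al be ga A B t S :=
  (- al * X0 al be ga A B t S + be * X1 al be ga A B t S - Mw (wgt al be ga A B t) (Derive S)) / ga.

Lemma PhiH0 al be ga A B t : Prm al be ga t -> PhiH (wgt al be ga A B t) (X0 al be ga A B t) 0.
Proof.
  intros Hp. split; [|split].
  - intros; apply X0_lin; auto.
  - intros; apply X0_ext; auto.
  - intros f Hf. rewrite (X0_ext _ _ _ _ _ _ _ (fun x => x * f x)) by (intro; ring). apply X0_P1; auto.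
Qed.

Lemma PhiH1 al be ga A B t : Prm al be ga t -> PhiH (wgt al be ga A B t) (fun S => - X1 al be ga A B t S) 1.
Proof.
  intros Hp. split; [|split].
  - intros. rewrite X1_lin; auto. ring.
  - intros. f_equal. apply X1_ext; auto.
  - intros f Hf. rewrite (X1_ext _ _ _ _ _ _ _ (fun x => (-1) * ((1 - x) * f x))) by (intro; ring).
    rewrite X1_scal; auto. rewrite X1_P1; auto. ring. apply C1_1mxf; auto.
Qed.

Lemma PhiHt al be ga A B t : Prm al be ga t -> PhiH (wgt al be ga A B t) (Phit al be ga A B t) t.
Proof.
  intros Hp. pose proof Hp as [Hal [Hbe [Hga Ht]]]. split; [|split].
  - intros f g c Hf Hg. unfold Phit. rewrite X0_lin, X1_lin by auto.
    rewrite (Mw_ext _ (Derive (fun x => f x + c * g x)) (fun x => Derive f x + c * Derive g x)).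
    2: { intro; apply Derive_lin; auto. }
    rewrite Mw_lin_gen; auto. field. lra. apply C1_dCont; auto. apply C1_dCont; auto.
  - intros f g E. unfold Phit. rewrite (X0_ext _ _ _ _ _ _ f g), (X1_ext _ _ _ _ _ _ f g) by auto.
    rewrite (Mw_ext _ (Derive f) (Derive g)); auto. intro; apply Derive_ext; auto.
  - intros f Hf. pose proof (C1_Cont _ Hf). pose proof (C1_dCont _ Hf).
    assert (E1 : X0 al be ga A B t (fun x => (x - t) * f x) = Mw (wgt al be ga A B t) f - t * X0 al be ga A B t f).
    { rewrite (X0_ext _ _ _ _ _ _ _ (fun x => x * f x + (- t) * f x)) by (intro; ring).
      rewrite X0_lin; auto. rewrite X0_P1; auto. ring. apply C1_xf; auto. }
    assert (E2 : X1 al be ga A B t (fun x => (x - t) * f x) = (1 - t) * X1 al be ga A B t f - Mw (wgt al be ga A B t) f).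
    { rewrite (X1_ext _ _ _ _ _ _ _ (fun x => (1 - t) * f x + (-1) * ((1 - x) * f x))) by (intro; ring).
      rewrite X1_lin; auto. rewrite X1_scal; auto. rewrite X1_P1; auto. ring. apply C1_scal; auto. apply C1_1mxf; auto. }
    assert (E3 : Mw (wgt al be ga A B t) (Derive (fun x => (x - t) * f x)) = Mw (wgt al be ga A B t) f + Mw (wgt al be ga A B t) (fun x => Derive f x * (x - t))).
    { rewrite (Mw_ext _ _ (fun x => f x + 1 * (Derive f x * (x - t)))).
      rewrite Mw_lin_gen; auto. ring. ctac.
      intro x. rewrite Derive_mul; auto. rewrite (Derive_ext _ (fun y => y + (-1) * (fun _ => t) y)) by (intro; simpl; ring).
      rewrite Derive_lin. rewrite Derive_const, Derive_id'. ring. apply C1_id. apply C1_const. apply C1_affine. }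
    pose proof (Eid al be ga A B t f Hp Hf) as E4.
    unfold Phit. rewrite E1, E2, E3. apply (Rmult_eq_reg_l ga). 2: lra.
    field_simplify; [|lra]. nra.
Qed.


Lemma C1_pow k : CC1 (fun x => x ^ k).
Proof.
  induction k. simpl. apply C1_const.
  apply C1_ext with (fun x => x * x ^ k). intro; simpl; ring. apply C1_mult; auto. apply C1_id.
Qed.

Lemma C1_lowpoly c k : CC1 (lowpoly c k).
Proof.
  induction k. simpl. apply C1_const.
  apply C1_ext with (fun x => lowpoly c k x + c k * x ^ k). intro; simpl; ring.
  apply C1_lin; auto. apply C1_pow.
Qed.

Lemma C1_monic k p : monic_deg k p -> CC1 p.
Proof.
  intros [c Hc]. apply C1_ext with (fun x => x ^ k + 1 * lowpoly c k x). intro; rewrite Hc; ring.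
  apply C1_lin. apply C1_pow. apply C1_lowpoly.
Qed.

Lemma deriv_pow k x : is_derive (fun y => y ^ S k) x (INR (S k) * x ^ k).
Proof.
  eapply is_derive_eq. apply (is_derive_pow (fun y => y) (S k) x 1).
  eapply is_derive_eq. apply (is_derive_id (K := R_AbsRing)). reflexivity. simpl. ring.
Qed.

Lemma deriv_lowpoly c k x : is_derive (lowpoly c (S k)) x (lowpoly (fun j => INR (S j) * c (S j)) k x).
Proof.
  induction k.
  - simpl. eapply is_derive_ext. intro y. symmetry. instantiate (1 := fun _ => c 0%nat). simpl. ring.
    apply (is_derive_const (c 0%nat)).
  - eapply is_derive_ext. intro y. symmetry. instantiate (1 := fun y => lowpoly c (S k) y + c (S k) * y ^ (S k)). reflexivity.
    eapply is_derive_eq. apply (is_derive_plus (lowpoly c (S k)) (fun y => c (S k) * y ^ (S k))).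
    apply IHk. apply is_derive_scal. apply deriv_pow.
    simpl. unfold plus; simpl. ring.
Qed.

Lemma lowpoly_scal a d k x : lowpoly (fun j => a * d j) k x = a * lowpoly d k x.
Proof. induction k; simpl. ring. rewrite IHk. ring. Qed.

Lemma monic_nonzero k : forall c u v, u < v ->
  ~ (forall x, u < x < v -> x ^ k + lowpoly c k x = 0).
Proof.
  induction k; intros c u v Huv Hz.
  - specialize (Hz ((u + v) / 2)). simpl in Hz. lra.
  - apply (IHk (fun j => / INR (S k) * (INR (S j) * c (S j))) u v Huv).
    intros x Hx.
    assert (D1 : is_derive (fun y => y ^ S k + lowpoly c (S k) y) x (INR (S k) * x ^ k + lowpoly (fun j => INR (S j) * c (S j)) k x)).
    { apply (is_derive_plus (fun y => y ^ S k) (lowpoly c (S k))). apply deriv_pow. apply deriv_lowpoly. }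
    assert (D2 : is_derive (fun y => y ^ S k + lowpoly c (S k) y) x 0).
    { apply is_derive_ext_loc with (fun _ => 0).
      apply locally_interval with u v; simpl; try lra. intros y H1 H2. symmetry; apply Hz; lra.
      apply (is_derive_const 0). }
    pose proof (is_derive_unique _ _ _ D1) as U1. pose proof (is_derive_unique _ _ _ D2) as U2.
    rewrite U1 in U2. rewrite lowpoly_scal.
    assert (0 < INR (S k)) by (apply lt_0_INR; lia).
    apply (Rmult_eq_reg_l (INR (S k))); [|lra]. rewrite Rmult_0_r, <- U2. field. lra.
Qed.

Lemma exists_nonzero k p u v : monic_deg k p -> u < v -> exists x, u < x < v /\ p x <> 0.
Proof.
  intros [c Hc] Huv. apply NNPP. intro N.
  apply (monic_nonzero k c u v Huv). intros x Hx. rewrite <- Hc.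
  apply NNPP. intro N2. apply N. exists x. split; auto.
Qed.

Lemma RInt_pos (g : R -> R) x0 : Cont g -> (forall x, 0 <= g x) -> 0 < x0 < 1 -> 0 < g x0 -> 0 < RInt g 0 1.
Proof.
  intros Cg Pg Hx0 Hg.
  destruct (cont_eps g x0 (Cg x0) (g x0 / 2)) as [d [Hd Kd]]; [lra|].
  set (e := Rmin (d / 2) (Rmin (x0 / 2) ((1 - x0) / 2))).
  assert (He : 0 < e) by (unfold e; repeat apply Rmin_pos; lra).
  assert (He1 : e <= d / 2) by apply Rmin_l.
  assert (He2 : e <= x0 / 2) by (unfold e; eapply Rle_trans; [apply Rmin_r|apply Rmin_l]).
  assert (He3 : e <= (1 - x0) / 2) by (unfold e; eapply Rle_trans; [apply Rmin_r|apply Rmin_r]).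
  assert (EX : forall u v, ex_RInt g u v) by (intros; apply (ex_RInt_continuous (V := R_CompleteNormedModule) g); intros; apply Cg).
  rewrite <- (RInt_Chasles g 0 (x0 - e) 1) by auto.
  rewrite <- (RInt_Chasles g (x0 - e) (x0 + e) 1) by auto.
  unfold plus; simpl.
  assert (I1 : 0 <= RInt g 0 (x0 - e)) by (apply RInt_ge_0; auto; lra).
  assert (I3 : 0 <= RInt g (x0 + e) 1) by (apply RInt_ge_0; auto; lra).
  assert (I2 : RInt (fun _ => 0) (x0 - e) (x0 + e) < RInt g (x0 - e) (x0 + e)).
  { apply RInt_lt. lra. intros; apply Cg. intros; apply cont_const.
    intros x Hx. assert (Rabs (g x - g x0) < g x0 / 2) by (apply Kd; apply Rabs_def1; lra).
    apply Rabs_def2 in H. lra. }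
  rewrite RInt_const in I2. unfold scal in I2; simpl in I2; unfold mult in I2; simpl in I2.
  lra.
Qed.

Lemma W_nonneg al be ga A B t x : 0 <= A -> 0 <= A + B -> 0 <= wgt al be ga A B t x.
Proof.
  intros HA HAB. rewrite wgt_eq. unfold W3.
  pose proof (rpw_ge0 x al). pose proof (rpw_ge0 (1 - x) be). pose proof (rpw_ge0 (x - t) ga). pose proof (rpw_ge0 (t - x) ga).
  apply Rmult_le_pos. apply Rmult_le_pos; auto. apply Rplus_le_le_0_compat; apply Rmult_le_pos; auto.
Qed.

Lemma W_pos_int al be ga A B t : Prm al be ga t -> 0 <= A -> 0 <= A + B -> ~ (A = 0 /\ A + B = 0) ->
  exists u v, 0 <= u < v /\ v <= 1 /\ forall x, u < x < v -> 0 < wgt al be ga A B t x.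
Proof.
  intros [Hal [Hbe [Hga Ht]]] HA HAB Hnz.
  destruct (Rlt_le_dec 0 A) as [HA'|HA'].
  - exists 0, t. split; [lra|split; [lra|]]. intros x Hx. rewrite wgt_eq. unfold W3.
    rewrite (rpw_npos (x - t)) by lra.
    pose proof (rpw_gt0 x al). pose proof (rpw_gt0 (1 - x) be). pose proof (rpw_gt0 (t - x) ga).
    apply Rmult_lt_0_compat. apply Rmult_lt_0_compat; [apply H; lra|apply H0; lra].
    assert (0 < rpw (t - x) ga) by (apply H1; lra). nra.
  - assert (A = 0) by lra. assert (0 < A + B) by (destruct (Req_dec (A + B) 0); [exfalso; apply Hnz; auto|lra]).
    exists t, 1. split; [lra|split; [lra|]]. intros x Hx. rewrite wgt_eq. unfold W3.
    rewrite (rpw_npos (t - x)) by lra.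
    pose proof (rpw_gt0 x al). pose proof (rpw_gt0 (1 - x) be). pose proof (rpw_gt0 (x - t) ga).
    apply Rmult_lt_0_compat. apply Rmult_lt_0_compat; [apply H1; lra|apply H2; lra].
    assert (0 < rpw (x - t) ga) by (apply H3; lra). nra.
Qed.

Lemma hh_pos al be ga A B t (P : nat -> R -> R) k : Prm al be ga t -> 0 <= A -> 0 <= A + B -> ~ (A = 0 /\ A + B = 0) ->
  monic_deg k (P k) -> 0 < hh (wgt al be ga A B t) P k.
Proof.
  intros Hp HA HAB Hnz Hm. pose proof Hp as [Hal [Hbe [Hga Ht]]].
  destruct (W_pos_int al be ga A B t Hp HA HAB Hnz) as [u [v [Huv [Hv Hw]]]].
  destruct (exists_nonzero k (P k) u v Hm (proj2 Huv)) as [x0 [Hx0 Hnz0]].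
  unfold hh, Mw. apply (RInt_pos _ x0).
  - pose proof (C1_monic k (P k) Hm) as HC. pose proof (C1_Cont _ HC). intro x. apply cont_mult. apply cont_mult; auto.
    apply wgt_cont; auto.
  - intro x. apply Rmult_le_pos. apply Rle_0_sqr. apply W_nonneg; auto.
  - lra.
  - apply Rmult_lt_0_compat. apply Rsqr_pos_lt; auto. apply Hw; lra.
Qed.


Lemma alg1 al be ga t N hn hm bnn an K1 X0S1 X1S1 X1P :
  0 < hn -> 0 < hm -> bnn * hm = hn -> 0 < t -> 0 < al -> 0 < be ->
  al * t * X0S1 + be * (1 - t) * X1S1 = K1 - t * N * hm ->
  al * t * hn + be * (1 - t) * (X1P - hn) = (an * hn - t * hn + 2 * (N * an * hn + bnn * K1) - 2 * t * (N * hn)) + (al + be + ga + 1) * (an * hn) ->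
  (al + be + ga + 2 * N + 2) * an
    = 2 * (t - 1) * (be / hm * X1S1) - 2 * t * (al / hm * X0S1) - (t - 1) * (be / hn * X1P) + t * al + (t - 1) * be + t.
Proof.
  intros Hn Hm Hb Ht Hal Hbe E1 E2.
  assert (Hb' : bnn = hn / hm) by (rewrite <- Hb; field; lra). subst bnn.
  assert (K : K1 = al * t * X0S1 + be * (1 - t) * X1S1 + t * N * hm) by lra. subst K1.
  apply (Rmult_eq_reg_r hn); [|lra].
  replace ((al + be + ga + 2 * N + 2) * an * hn) with
    (al * t * hn + be * (1 - t) * (X1P - hn) + t * hn - 2 * (hn / hm * (al * t * X0S1 + be * (1 - t) * X1S1 + t * N * hm)) + 2 * t * (N * hn)) by (rewrite E2; ring).
  field. lra.
Qed.

Lemma alg2 al be ga t N hn hm bnn u2 v2 u3 v3 X0S1 X1S1 :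
  0 < hn -> 0 < hm -> bnn * hm = hn -> 0 < t -> 0 < al -> 0 < be -> 0 < ga ->
  al * t * u2 + be * (1 - t) * v2 = (2 * N + al + be + ga + 1) * hn ->
  al * t * u3 + be * (1 - t) * v3 = (2 * (N - 1) + al + be + ga + 1) * hm ->
  X0S1 ^ 2 - hm * X0S1 = u2 * u3 ->
  (- X1S1) ^ 2 - hm * (- X1S1) = (- v2) * (- v3) ->
  ((- al * X0S1 + be * X1S1 - N * hm) / ga) ^ 2 - hm * ((- al * X0S1 + be * X1S1 - N * hm) / ga)
    = ((- al * u2 + be * v2 - 0) / ga) * ((- al * u3 + be * v3 - 0) / ga) ->
  let yn := al / hm * X0S1 in let rn := be / hm * X1S1 in
  (al + be + ga + 2 * N + 1) * (al + be + ga + 2 * N - 1) * bnn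
    = (t * yn - (t - 1) * rn) ^ 2
      - (t - 1) * (2 * N * t + ga * t + be) * rn
      + t * ((t - 1) * (2 * N + ga) - al) * yn
      + N * (N + ga) * (t ^ 2 - t).
Proof.
  intros Hn Hm Hb Ht Hal Hbe Hga E1 E2 K0 K1 Kt yn rn.
  assert (Hb' : bnn = hn / hm) by (rewrite <- Hb; field; lra). subst bnn.
  assert (C : (al + be + ga + 2 * N + 1) * (al + be + ga + 2 * N - 1) * hn * hm
     = t * al ^ 2 * (u2 * u3) + (1 - t) * be ^ 2 * (v2 * v3) - t * (1 - t) * ((be * v2 - al * u2) * (be * v3 - al * u3))).
  { replace ((al + be + ga + 2 * N + 1) * (al + be + ga + 2 * N - 1) * hn * hm)
      with (((2 * N + al + be + ga + 1) * hn) * ((2 * (N - 1) + al + be + ga + 1) * hm)) by ring.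
    rewrite <- E1, <- E2. ring. }
  assert (Kt' : (be * v2 - al * u2) * (be * v3 - al * u3) = (- al * X0S1 + be * X1S1 - N * hm) ^ 2 - ga * hm * (- al * X0S1 + be * X1S1 - N * hm)).
  { apply (Rmult_eq_reg_r (/ ga ^ 2)). 2: { apply Rinv_neq_0_compat. apply pow_nonzero. lra. }
    replace ((be * v2 - al * u2) * (be * v3 - al * u3) * / ga ^ 2) with (((- al * u2 + be * v2 - 0) / ga) * ((- al * u3 + be * v3 - 0) / ga)) by (field; lra).
    rewrite <- Kt. field. lra. }
  rewrite <- K0 in C. replace (v2 * v3) with ((- v2) * (- v3)) in C by ring. rewrite <- K1 in C. rewrite Kt' in C.
  unfold yn, rn. apply (Rmult_eq_reg_r (hn * hm)). 2: { apply Rmult_integral_contrapositive; split; lra. }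
  replace ((al + be + ga + 2 * N + 1) * (al + be + ga + 2 * N - 1) * (hn / hm) * (hn * hm)) with
    ((al + be + ga + 2 * N + 1) * (al + be + ga + 2 * N - 1) * hn * hm * (hn / hm)) by ring.
  rewrite C. field. lra.
Qed.

Theorem proposition3p1
  (al be ga A B t : R)
  (Hal : 0 < al) (Hbe : 0 < be) (Hga : 0 < ga)
  (HA : 0 <= A) (HAB : 0 <= A + B) (Hnz : ~ (A = 0 /\ A + B = 0))
  (Ht : 0 < t < 1)
  (P : nat -> R -> R) (h an bn : nat -> R)
  (HP : monic_OPS (wgt al be ga A B t) P h)
  (Hrec : recurrence P an bn)
  (n : nat) (Hn : (1 <= n)%nat)
  (IR Iy Ir : R)
  (HIR : int01 (fun y => P n y * P n y * wgt al be ga A B t y / (1 - y)) IR)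
  (HIy : int01 (fun y => P n y * P (pred n) y * wgt al be ga A B t y / y) Iy)
  (HIr : int01 (fun y => P n y * P (pred n) y * wgt al be ga A B t y / (1 - y)) Ir) :
  let Rn := be / h n * IR in
  let yn := al / h (pred n) * Iy in
  let rn := be / h (pred n) * Ir in
  let N := INR n in
  (al + be + ga + 2 * N + 2) * an n
    = 2 * (t - 1) * rn - 2 * t * yn - (t - 1) * Rn + t * al + (t - 1) * be + t
  /\
  (al + be + ga + 2 * N + 1) * (al + be + ga + 2 * N - 1) * bn n
    = (t * yn - (t - 1) * rn) ^ 2
      - (t - 1) * (2 * N * t + ga * t + be) * rn
      + t * ((t - 1) * (2 * N + ga) - al) * yn
      + N * (N + ga) * (t ^ 2 - t).
Proof.
  intros Rn yn rn N.
  destruct HP as [Hmon [Hort Hh]].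
  assert (Hp : Prm al be ga t) by (repeat split; lra).
  assert (HW : Cont (wgt al be ga A B t)) by (apply CW; auto).
  assert (HCP : forall k, CC1 (P k)) by (intro k; apply (C1_monic k (P k) (Hmon k))).
  assert (HP0 : forall x, P 0%nat x = 1).
  { intro x. destruct (Hmon 0%nat) as [c Hc]. rewrite Hc. simpl. ring. }
  assert (HO : forall j k, j <> k -> Mw (wgt al be ga A B t) (fun x => P j x * P k x) = 0).
  { intros j k Hjk. symmetry. refine (int01'_unique (fun x => P j x * P k x * wgt al be ga A B t x) _ _ (int01_to _ _ (Hort j k Hjk)) _).
    unfold Mw. apply int01'_cont. intros x _. ctac. }
  assert (Hhh : forall k, h k = hh (wgt al be ga A B t) P k).
  { intros k. refine (int01'_unique (fun x => P k x * P k x * wgt al be ga A B t x) _ _ (int01_to _ _ (Hh k)) _).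
    unfold hh, Mw. apply int01'_cont. intros x _. ctac. }
  assert (H : OPH (wgt al be ga A B t) P an bn) by exact (conj HW (conj HCP (conj HO (conj Hrec HP0)))).
  set (S1 := fun x => P n x * P (pred n) x).
  set (S2 := fun x => P n x * P n x).
  set (S3 := fun x => P (pred n) x * P (pred n) x).
  assert (CS1 : CC1 S1) by (apply C1_mult; auto).
  assert (CS2 : CC1 S2) by (apply C1_mult; auto).
  assert (CS3 : CC1 S3) by (apply C1_mult; auto).
  assert (EIy : Iy = X0 al be ga A B t S1).
  { refine (int01'_unique (fun y => P n y * P (pred n) y * wgt al be ga A B t y / y) _ _ (int01_to _ _ HIy) _). apply IBP0; auto. }
  assert (EIr : Ir = X1 al be ga A B t S1).
  { refine (int01'_unique (fun y => P n y * P (pred n) y * wgt al be ga A B t y / (1 - y)) _ _ (int01_to _ _ HIr) _). apply IBP1; auto. }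
  assert (EIR : IR = X1 al be ga A B t S2).
  { refine (int01'_unique (fun y => P n y * P n y * wgt al be ga A B t y / (1 - y)) _ _ (int01_to _ _ HIR) _). apply IBP1; auto. }
  set (hn := hh (wgt al be ga A B t) P n).
  set (hm := hh (wgt al be ga A B t) P (pred n)).
  assert (Hhn : 0 < hn) by (apply hh_pos; auto).
  assert (Hhm : 0 < hm) by (apply hh_pos; auto).
  assert (Hb : bn n * hm = hn).
  { unfold hm, hn. pose proof (hh_succ _ _ _ _ H (pred n)) as E. replace (S (pred n)) with n in E by lia. exact E. }
  assert (HNm : INR (pred n) = N - 1).
  { unfold N. destruct n; [lia|]. rewrite S_INR. simpl. ring. }
  assert (DS1 : forall x, Derive S1 x = Derive (P n) x * P (pred n) x + P n x * Derive (P (pred n)) x).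
  { intro x. unfold S1. apply Derive_mul; auto. }
  assert (MDS1 : Mw (wgt al be ga A B t) (Derive S1) = N * hm).
  { rewrite (Mw_ext _ _ (fun x => Derive (P n) x * P (pred n) x + 1 * (P n x * Derive (P (pred n)) x))).
    2: { intro x. rewrite DS1. ring. }
    rewrite Mw_lin by (auto; ctac). rewrite (M_PD_pred _ _ an bn n H Hn). rewrite (proj1 (M_P_Dpred _ _ an bn n H)).
    unfold hm, N. ring. }
  assert (MS1 : Mw (wgt al be ga A B t) S1 = 0) by (apply HO; lia).
  set (K1 := Mw (wgt al be ga A B t) (fun x => x * Derive (P n) x * P (pred n) x)).
  assert (I1 : al * t * X0 al be ga A B t S1 + be * (1 - t) * X1 al be ga A B t S1 = K1 - t * N * hm).
  { rewrite Eid by auto. rewrite MS1.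
    rewrite (Mw_ext _ _ (fun x => ((x * Derive (P n) x * P (pred n) x + (- t) * (Derive (P n) x * P (pred n) x))
          + 1 * (P n x * (x * Derive (P (pred n)) x))) + (- t) * (P n x * Derive (P (pred n)) x))).
    2: { intro x. rewrite DS1. ring. }
    rewrite Mw_lin by (auto; ctac). rewrite Mw_lin by (auto; ctac). rewrite Mw_lin by (auto; ctac).
    rewrite (M_PD_pred _ _ an bn n H Hn). rewrite (proj1 (M_P_Dpred _ _ an bn n H)), (proj2 (M_P_Dpred _ _ an bn n H)).
    fold K1. unfold hm, N. ring. }
  set (S2x := fun x => x * (P n x * P n x)).
  assert (CS2x : CC1 S2x) by (apply C1_xf; auto).
  assert (DS2 : forall x, Derive S2 x = 2 * (P n x * Derive (P n) x)).
  { intro x. unfold S2. rewrite Derive_mul by auto. ring. }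
  assert (DS2x : forall x, Derive S2x x = P n x * P n x + x * (2 * (P n x * Derive (P n) x))).
  { intro x. unfold S2x. rewrite (Derive_mul (fun y => y) S2) by (auto; apply C1_id). rewrite Derive_id', DS2. unfold S2. ring. }
  assert (I2 : al * t * hn + be * (1 - t) * (X1 al be ga A B t S2 - hn)
     = (an n * hn - t * hn + 2 * (N * an n * hn + bn n * K1) - 2 * t * (N * hn)) + (al + be + ga + 1) * (an n * hn)).
  { assert (X0S2x : X0 al be ga A B t S2x = hn) by (unfold S2x; rewrite X0_P1; auto).
    assert (X1S2x : X1 al be ga A B t S2x = X1 al be ga A B t S2 - hn).
    { rewrite (X1_ext _ _ _ _ _ _ _ (fun x => S2 x + (-1) * ((1 - x) * S2 x))) by (intro; unfold S2x, S2; ring).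
      rewrite X1_lin; auto. rewrite X1_P1; auto. unfold hn, hh. fold S2. ring. apply C1_1mxf; auto. }
    pose proof (Eid al be ga A B t S2x Hp CS2x) as E. rewrite X0S2x, X1S2x in E. rewrite E.
    assert (MS2x : Mw (wgt al be ga A B t) S2x = an n * hn).
    { unfold S2x, hn. rewrite <- (M_xPP _ _ an bn n H). apply Mw_ext. intro; ring. }
    rewrite MS2x. f_equal.
    rewrite (Mw_ext _ _ (fun x => ((x * P n x * P n x + (- t) * (P n x * P n x)) + 2 * (x * x * P n x * Derive (P n) x))
           + (- 2 * t) * (P n x * (x * Derive (P n) x)))).
    2: { intro x. rewrite DS2x. ring. }
    rewrite Mw_lin by (auto; ctac). rewrite Mw_lin by (auto; ctac). rewrite Mw_lin by (auto; ctac).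
    rewrite (M_xPP _ _ an bn n H). rewrite (M_xxPD _ _ an bn n H Hn). rewrite (M_PxD_same _ _ an bn n H).
    fold K1. unfold hn, hh, N. ring. }
  assert (E1k : forall k, al * t * X0 al be ga A B t (fun x => P k x * P k x) + be * (1 - t) * X1 al be ga A B t (fun x => P k x * P k x)
                = (2 * INR k + al + be + ga + 1) * hh (wgt al be ga A B t) P k).
  { intro k. rewrite Eid; [|auto|apply C1_mult; auto].
    rewrite (Mw_ext _ _ (fun x => 2 * (P k x * (x * Derive (P k) x)) + (- 2 * t) * (P k x * Derive (P k) x))).
    2: { intro x. rewrite Derive_mul by auto. ring. }
    rewrite Mw_lin by (auto; ctac). rewrite Mw_scal by (auto; ctac).
    rewrite (M_PxD_same _ _ an bn k H), (M_PD_same _ _ an bn k H). unfold hh. ring. }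
  assert (DPk : forall k, Mw (wgt al be ga A B t) (Derive (fun x => P k x * P k x)) = 0).
  { intro k. rewrite (Mw_ext _ _ (fun x => 2 * (P k x * Derive (P k) x))).
    rewrite Mw_scal by (auto; ctac). rewrite (M_PD_same _ _ an bn k H). ring.
    intro x. rewrite Derive_mul by auto. ring. }
  assert (K0 := Key _ _ an bn _ 0 n H (PhiH0 al be ga A B t Hp) Hn).
  assert (K1' := Key _ _ an bn _ 1 n H (PhiH1 al be ga A B t Hp) Hn).
  assert (Kt := Key _ _ an bn _ t n H (PhiHt al be ga A B t Hp) Hn).
  unfold Phit in Kt. fold S1 S2 S3 in K0, K1', Kt. fold hm in K0, K1', Kt.
  rewrite MDS1 in Kt. unfold S2, S3 in Kt. rewrite !DPk in Kt. fold S2 S3 in Kt.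
  pose proof (E1k n) as E1n. pose proof (E1k (pred n)) as E1m. fold S2 in E1n. fold S3 in E1m. fold hn in E1n. fold hm in E1m.
  rewrite HNm in E1m. fold N in E1n.
  unfold Rn, yn, rn. rewrite !Hhh. fold hn hm. rewrite EIy, EIr, EIR.
  split.
  - apply (alg1 al be ga t N hn hm (bn n) (an n) K1); auto. lra.
  - pose proof (alg2 al be ga t N hn hm (bn n) _ _ _ _ _ _ Hhn Hhm Hb (proj1 Ht) Hal Hbe Hga E1n E1m K0 K1' Kt) as G.
    cbv zeta in G. exact G.
Qed.
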